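(* Let $\{A,B,C,D\}$ be a Descartes configuration in $\mathbb{R}^2$ in which every disk has integral symbol (all of $\dot x,\dot y$, curvature, co-curvature are integers) and the tangency spinor of each of the six pairs of disks is a Gaussian integer. Then: (a) if $D'$ is the Descartes conjugate of $D$ with respect to $A,B,C$, the Descartes configuration $\{A,B,C,D'\}$ again has integral symbols (indeed the symbols satisfy $\mathbf D+\mathbf D'=2(\mathbf A+\mathbf B+\mathbf C)$ entrywise) and Gaussian-integer tangency spinors for all six pairs; (b) the image of the configuration under inversion in the boundary circle of $A$ — whose disks have symbols $-\mathbf A$, $\mathbf B+2\mathbf A$, $\mathbf C+2\mathbf A$, $\mathbf D+2\mathbf A$ — again has integral symbols and Gaussian-integer tangency spinors for all six pairs.
   Context: A (generalized) disk in $\mathbb{R}^2$ is one of: (i) a closed round disk of radius $r>0$ with center $(x,y)$, curvature $A=1/r$; (ii) the closure of the complement of an open round disk of radius $r>0$ with center $(x,y)$, curvature $A=-1/r$; (iii) a closed half-plane $\{p: p\cdot n\ge h\}$, $|n|=1$, curvature $0$. A disk and its curvature are denoted by the same letter. The symbol of a disk $A$ is the vector $\mathbf A=(\dot x_A,\dot y_A,A,A^c)$ where in cases (i),(ii) $\dot x_A=Ax$, $\dot y_A=Ay$, $A^c=(\dot x_A^2+\dot y_A^2-1)/A$, and in case (iii) $(\dot x_A,\dot y_A)=n$, $A^c=2h$. Two disks are tangent if their interiors are disjoint and their boundaries meet in exactly one point (or they are half-planes with disjoint interiors and parallel boundaries). For tangent disks $A,B$ the tangency spinor is defined up to sign by $\mathrm{spin}(A,B)^2=(A\dot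 x_B-B\dot x_A)+i(A\dot y_B-B\dot y_A)$. A Descartes configuration is a set of four pairwise tangent disks with pairwise disjoint interiors; given three of them, the other disk tangent to all three with interior disjoint from them is the Descartes conjugate of the fourth. *)

(* Defs.v *)
From Stdlib Require Import Reals ZArith.
Open Scope R_scope.

Definition point := (R * R)%type.

(* Generalized disks:
   RoundDisk x y r : closed round disk, center (x,y), radius r (r > 0)
   CoDisk x y r    : closure of the complement of the open round disk
                     of center (x,y), radius r (r > 0)
   HalfPlane nx ny h : closed half-plane {p | p . n >= h}, |n| = 1 *)
Inductive disk : Type :=
| RoundDisk (x y r : R)
| CoDisk (x y r : R)
| HalfPlane (nx ny h : R).

Definition valid_disk (d : disk) : Prop :=
  match d with
  | RoundDisk _ _ r | CoDisk _ _ r => 0 < r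
  | HalfPlane nx ny _ => nx ^ 2 + ny ^ 2 = 1
  end.

Definition dist2 (p : point) (x y : R) : R := (fst p - x) ^ 2 + (snd p - y) ^ 2.
Definition dotn (p : point) (nx ny : R) : R := fst p * nx + snd p * ny.

Definition mem (d : disk) (p : point) : Prop :=
  match d with
  | RoundDisk x y r => dist2 p x y <= r ^ 2
  | CoDisk x y r => r ^ 2 <= dist2 p x y
  | HalfPlane nx ny h => h <= dotn p nx ny
  end.

Definition interior (d : disk) (p : point) : Prop :=
  match d with
  | RoundDisk x y r => dist2 p x y < r ^ 2
  | CoDisk x y r => r ^ 2 < dist2 p x y
  | HalfPlane nx ny h => h < dotn p nx ny
  end.

Definition boundary (d : disk) (p : point) : Prop :=
  match d with
  | RoundDisk x y r | CoDisk x y r => dist2 p x y = r ^ 2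
  | HalfPlane nx ny h => dotn p nx ny = h
  end.

Definition is_half (d : disk) : Prop :=
  match d with HalfPlane _ _ _ => True | _ => False end.

Definition tangent (d e : disk) : Prop :=
  (forall p, ~ (interior d p /\ interior e p)) /\
  ((exists p, boundary d p /\ boundary e p /\
       forall q, boundary d q -> boundary e q -> q = p)
   \/ (is_half d /\ is_half e /\ ~ (exists p, boundary d p /\ boundary e p))).

Definition curv (d : disk) : R :=
  match d with
  | RoundDisk _ _ r => 1 / r
  | CoDisk _ _ r => - (1 / r)
  | HalfPlane _ _ _ => 0
  end.

Definition xdot (d : disk) : R :=
  match d with
  | RoundDisk x _ _ | CoDisk x _ _ => curv d * x
  | HalfPlane nx _ _ => nx
  end.

Definition ydot (d : disk) : R :=
  match d with
  | RoundDisk _ y _ | CoDisk _ y _ => curv d * y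
  | HalfPlane _ ny _ => ny
  end.

Definition cocurv (d : disk) : R :=
  match d with
  | RoundDisk _ _ _ | CoDisk _ _ _ => (xdot d ^ 2 + ydot d ^ 2 - 1) / curv d
  | HalfPlane _ _ h => 2 * h
  end.

Definition symbol (d : disk) : R * R * R * R := (xdot d, ydot d, curv d, cocurv d).

Definition is_int (t : R) : Prop := exists z : Z, t = IZR z.

Definition integral_symbol (d : disk) : Prop :=
  is_int (xdot d) /\ is_int (ydot d) /\ is_int (curv d) /\ is_int (cocurv d).

(* spin(d,e)^2 = (d xdot_e - e xdot_d) + i (d ydot_e - e ydot_d);
   the spinor is a Gaussian integer iff this complex number is the square
   (a + b i)^2 = (a^2 - b^2) + (2ab) i of some Gaussian integer a + b i. *)
Definition spin_sq_re (d e : disk) : R := curv d * xdot e - curv e * xdot d.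
Definition spin_sq_im (d e : disk) : R := curv d * ydot e - curv e * ydot d.

Definition gaussian_spinor (d e : disk) : Prop :=
  exists a b : Z,
    IZR a ^ 2 - IZR b ^ 2 = spin_sq_re d e /\
    2 * IZR a * IZR b = spin_sq_im d e.

(* Descartes configuration {A,B,C,D}: four (valid) pairwise tangent disks
   (interiors are then pairwise disjoint by definition of tangency). *)
Definition descartes (A B C D : disk) : Prop :=
  valid_disk A /\ valid_disk B /\ valid_disk C /\ valid_disk D /\
  tangent A B /\ tangent A C /\ tangent A D /\
  tangent B C /\ tangent B D /\ tangent C D.

Definition all_integral (A B C D : disk) : Prop :=
  integral_symbol A /\ integral_symbol B /\ integral_symbol C /\ integral_symbol D.

Definition all_gaussian (A B C D : disk) : Prop :=
  gaussian_spinor A B /\ gaussian_spinor A C /\ gaussian_spinor A D /\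
  gaussian_spinor B C /\ gaussian_spinor B D /\ gaussian_spinor C D.

Definition descartes_conjugate (A B C D D' : disk) : Prop :=
  valid_disk D' /\ tangent A D' /\ tangent B D' /\ tangent C D' /\ D' <> D.

(* Inversion in the boundary circle of A (reflection if A is a half-plane).
   inv_dom A p : p is in the domain of the inversion (p is not the center). *)
Definition inv_dom (A : disk) (p : point) : Prop :=
  match A with
  | RoundDisk x y _ | CoDisk x y _ => p <> (x, y)
  | HalfPlane _ _ _ => True
  end.

Definition inv_map (A : disk) (p : point) : point :=
  match A with
  | RoundDisk x y r | CoDisk x y r =>
      (x + r ^ 2 * (fst p - x) / dist2 p x y,
       y + r ^ 2 * (snd p - y) / dist2 p x y)
  | HalfPlane nx ny h =>
      (fst p - 2 * (dotn p nx ny - h) * nx,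
       snd p - 2 * (dotn p nx ny - h) * ny)
  end.

(* Y is the image of the disk X under inversion in the boundary of A
   (as closed sets they agree away from the center of inversion). *)
Definition inv_image (A X Y : disk) : Prop :=
  forall p, inv_dom A p -> (mem Y p <-> mem X (inv_map A p)).

(* Main.v *)
Require Import Defs.
From Stdlib Require Import Reals ZArith Lra Psatz.
Open Scope R_scope.


Definition Qv (x1 y1 a1 b1 x2 y2 a2 b2 : R) := x1*x2 + y1*y2 - (a1*b2 + b1*a2)/2.
Definition Qd (d e : disk) := Qv (xdot d) (ydot d) (curv d) (cocurv d) (xdot e) (ydot e) (curv e) (cocurv e).
Definition fv (x y a b : R) (p : point) := a*(fst p^2 + snd p^2) - 2*(x*fst p + y*snd p) + b.
Definition fd (d : disk) p := fv (xdot d) (ydot d) (curv d) (cocurv d) p.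

Lemma norm1 d : valid_disk d -> Qd d d = 1.
Proof.
  destruct d as [x y r|x y r|nx ny h]; simpl; intro H; unfold Qd, Qv; simpl.
  - field. lra.
  - field. lra.
  - nra.
Qed.

Lemma fd_round x y r p : 0 < r -> fd (RoundDisk x y r) p = (dist2 p x y - r^2)/r.
Proof. intro; unfold fd, fv, dist2; simpl. field. lra. Qed.
Lemma fd_co x y r p : 0 < r -> fd (CoDisk x y r) p = (r^2 - dist2 p x y)/r.
Proof. intro; unfold fd, fv, dist2; simpl. field. lra. Qed.
Lemma fd_half nx ny h p : fd (HalfPlane nx ny h) p = 2*(h - dotn p nx ny).
Proof. unfold fd, fv, dotn; simpl. ring. Qed.

Lemma divsign t r : 0 < r -> (t / r <= 0 <-> t <= 0) /\ (t / r < 0 <-> t < 0) /\ (t / r = 0 <-> t = 0).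
Proof.
  intro Hr. assert (E : t = (t/r)*r) by (field; lra).
  split; [|split]; split; intro H.
  - rewrite E; nra.
  - apply Rmult_le_reg_r with r; auto. rewrite <- E; lra.
  - rewrite E; nra.
  - apply Rmult_lt_reg_r with r; auto. rewrite <- E; lra.
  - rewrite E, H; ring.
  - rewrite H; unfold Rdiv; ring.
Qed.

Lemma mem_f d p : valid_disk d -> (Defs.mem d p <-> fd d p <= 0).
Proof.
  destruct d as [x y r|x y r|nx ny h]; simpl; intro H.
  - rewrite fd_round by auto. destruct (divsign (dist2 p x y - r^2) r H) as [E _]. rewrite E; lra.
  - rewrite fd_co by auto. destruct (divsign (r^2 - dist2 p x y) r H) as [E _]. rewrite E; lra.
  - rewrite fd_half; lra.
Qed.
Lemma int_f d p : valid_disk d -> (Defs.interior d p <-> fd d p < 0).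
Proof.
  destruct d as [x y r|x y r|nx ny h]; simpl; intro H.
  - rewrite fd_round by auto. destruct (divsign (dist2 p x y - r^2) r H) as [_ [E _]]. rewrite E; lra.
  - rewrite fd_co by auto. destruct (divsign (r^2 - dist2 p x y) r H) as [_ [E _]]. rewrite E; lra.
  - rewrite fd_half; lra.
Qed.
Lemma bd_f d p : valid_disk d -> (Defs.boundary d p <-> fd d p = 0).
Proof.
  destruct d as [x y r|x y r|nx ny h]; simpl; intro H.
  - rewrite fd_round by auto. destruct (divsign (dist2 p x y - r^2) r H) as [_ [_ E]]. rewrite E; lra.
  - rewrite fd_co by auto. destruct (divsign (r^2 - dist2 p x y) r H) as [_ [_ E]]. rewrite E; lra.
  - rewrite fd_half; lra.
Qed.

Lemma tang_core x1 y1 a1 b1 x2 y2 a2 b2 px py :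
  Qv x1 y1 a1 b1 x1 y1 a1 b1 = 1 -> Qv x2 y2 a2 b2 x2 y2 a2 b2 = 1 ->
  fv x1 y1 a1 b1 (px,py) = 0 -> fv x2 y2 a2 b2 (px,py) = 0 ->
  (forall q, ~ (fv x1 y1 a1 b1 q < 0 /\ fv x2 y2 a2 b2 q < 0)) ->
  Qv x1 y1 a1 b1 x2 y2 a2 b2 = -1.
Proof.
  intros N1 N2 F1 F2 Hd.
  set (g1x := a1*px - x1). set (g1y := a1*py - y1).
  set (g2x := a2*px - x2). set (g2y := a2*py - y2).
  assert (G1 : g1x^2 + g1y^2 = 1).
  { assert (E : g1x^2 + g1y^2 = a1 * fv x1 y1 a1 b1 (px,py) + Qv x1 y1 a1 b1 x1 y1 a1 b1)
      by (unfold g1x, g1y, fv, Qv; simpl; field).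
    rewrite E, F1, N1; ring. }
  assert (G2 : g2x^2 + g2y^2 = 1).
  { assert (E : g2x^2 + g2y^2 = a2 * fv x2 y2 a2 b2 (px,py) + Qv x2 y2 a2 b2 x2 y2 a2 b2)
      by (unfold g2x, g2y, fv, Qv; simpl; field).
    rewrite E, F2, N2; ring. }
  assert (Gd : g1x*g2x + g1y*g2y = Qv x1 y1 a1 b1 x2 y2 a2 b2).
  { assert (E : g1x*g2x + g1y*g2y = (a2 * fv x1 y1 a1 b1 (px,py) + a1 * fv x2 y2 a2 b2 (px,py))/2
                 + Qv x1 y1 a1 b1 x2 y2 a2 b2) by (unfold g1x, g1y, g2x, g2y, fv, Qv; simpl; field).
    rewrite E, F1, F2; field. }
  set (Q := Qv x1 y1 a1 b1 x2 y2 a2 b2) in *.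
  assert (Hge : -1 <= Q).
  { assert (0 <= (g1x+g2x)^2 + (g1y+g2y)^2) by (apply Rplus_le_le_0_compat; apply pow2_ge_0).
    assert (E : (g1x+g2x)^2 + (g1y+g2y)^2 = (g1x^2+g1y^2) + (g2x^2+g2y^2) + 2*(g1x*g2x+g1y*g2y)) by ring.
    rewrite E, G1, G2, Gd in H. lra. }
  destruct (Rle_lt_or_eq_dec (-1) Q Hge) as [Hlt|Heq]; [|auto].
  exfalso.
  set (vx := -(g1x+g2x)). set (vy := -(g1y+g2y)).
  set (e := 1/(Rabs a1 + Rabs a2 + 1)).
  assert (He : 0 < e) by (unfold e; apply Rdiv_lt_0_compat; [lra| pose proof (Rabs_pos a1); pose proof (Rabs_pos a2); lra]).
  assert (Hae1 : a1 * e < 1).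
  { unfold e. pose proof (Rabs_pos a1); pose proof (Rabs_pos a2); pose proof (Rle_abs a1).
    apply (Rmult_lt_reg_r (Rabs a1 + Rabs a2 + 1)); [lra|]. field_simplify; lra. }
  assert (Hae2 : a2 * e < 1).
  { unfold e. pose proof (Rabs_pos a1); pose proof (Rabs_pos a2); pose proof (Rle_abs a2).
    apply (Rmult_lt_reg_r (Rabs a1 + Rabs a2 + 1)); [lra|]. field_simplify; lra. }
  apply (Hd (px + e*vx, py + e*vy)). split.
  - assert (E : fv x1 y1 a1 b1 (px + e*vx, py + e*vy) = fv x1 y1 a1 b1 (px,py)
         + 2*e*(g1x*vx + g1y*vy) + a1*e^2*(vx^2+vy^2)) by (unfold fv, g1x, g1y; simpl; ring).
    rewrite E, F1.
    assert (E2 : g1x*vx + g1y*vy = -(1+Q)).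
    { unfold vx, vy. replace (-(1+Q)) with (-((g1x^2+g1y^2) + (g1x*g2x+g1y*g2y))) by (rewrite G1, Gd; ring). ring. }
    assert (E3 : vx^2+vy^2 = 2+2*Q).
    { unfold vx, vy. replace (2+2*Q) with ((g1x^2+g1y^2) + (g2x^2+g2y^2) + 2*(g1x*g2x+g1y*g2y)) by (rewrite G1, G2, Gd; ring). ring. }
    rewrite E2, E3. assert (0 < e*(1+Q)) by nra. nra.
  - assert (E : fv x2 y2 a2 b2 (px + e*vx, py + e*vy) = fv x2 y2 a2 b2 (px,py)
         + 2*e*(g2x*vx + g2y*vy) + a2*e^2*(vx^2+vy^2)) by (unfold fv, g2x, g2y; simpl; ring).
    rewrite E, F2.
    assert (E2 : g2x*vx + g2y*vy = -(1+Q)).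
    { unfold vx, vy. replace (-(1+Q)) with (-((g2x^2+g2y^2) + (g1x*g2x+g1y*g2y))) by (rewrite G2, Gd; ring). ring. }
    assert (E3 : vx^2+vy^2 = 2+2*Q).
    { unfold vx, vy. replace (2+2*Q) with ((g1x^2+g1y^2) + (g2x^2+g2y^2) + 2*(g1x*g2x+g1y*g2y)) by (rewrite G1, G2, Gd; ring). ring. }
    rewrite E2, E3. assert (0 < e*(1+Q)) by nra. nra.
Qed.

Lemma half_core n1x n1y h1 n2x n2y h2 :
  n1x^2 + n1y^2 = 1 -> n2x^2 + n2y^2 = 1 ->
  (forall q, ~ (h1 < dotn q n1x n1y /\ h2 < dotn q n2x n2y)) ->
  n1x*n2x + n1y*n2y = -1.
Proof.
  intros N1 N2 Hd. set (c := n1x*n2x + n1y*n2y).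
  assert (Hge : -1 <= c).
  { assert (0 <= (n1x+n2x)^2 + (n1y+n2y)^2) by (apply Rplus_le_le_0_compat; apply pow2_ge_0).
    unfold c; nra. }
  destruct (Rle_lt_or_eq_dec (-1) c Hge) as [Hlt|Heq]; [|auto].
  exfalso. set (l := (Rabs h1 + Rabs h2 + 1)/(1+c)).
  apply (Hd (l*(n1x+n2x), l*(n1y+n2y))). unfold dotn; simpl.
  assert (E1 : l*(n1x+n2x)*n1x + l*(n1y+n2y)*n1y = l*(1+c)).
  { transitivity (l*((n1x^2+n1y^2) + c)); [unfold c; ring| rewrite N1; ring]. }
  assert (E2 : l*(n1x+n2x)*n2x + l*(n1y+n2y)*n2y = l*(1+c)).
  { transitivity (l*((n2x^2+n2y^2) + c)); [unfold c; ring| rewrite N2; ring]. }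
  assert (E3 : l*(1+c) = Rabs h1 + Rabs h2 + 1) by (unfold l; field; lra).
  rewrite E1, E2, E3. pose proof (Rle_abs h1); pose proof (Rle_abs h2);
  pose proof (Rabs_pos h1); pose proof (Rabs_pos h2). lra.
Qed.

Lemma tangQ d e : valid_disk d -> valid_disk e -> tangent d e -> Qd d e = -1.
Proof.
  intros Vd Ve [Hdisj Hb]. destruct Hb as [[p [B1 [B2 _]]] | [Hh1 [Hh2 _]]].
  - destruct p as [px py]. unfold Qd. apply tang_core with px py.
    + apply norm1; auto.
    + apply norm1; auto.
    + apply (bd_f d (px,py) Vd); auto.
    + apply (bd_f e (px,py) Ve); auto.
    + intros q [I1 I2]. apply (Hdisj q); split.
      * apply (int_f d q Vd); auto.
      * apply (int_f e q Ve); auto.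
  - destruct d as [x y r|x y r|nx ny h]; simpl in Hh1; try contradiction.
    destruct e as [x' y' r'|x' y' r'|nx' ny' h']; simpl in Hh2; try contradiction.
    simpl in Vd, Ve. unfold Qd, Qv; simpl.
    assert (H := half_core nx ny h nx' ny' h' Vd Ve).
    rewrite H. lra. intros q Hq. apply (Hdisj q). exact Hq.
Qed.

Definition det3 a b c d e f g h i := a*(e*i - f*h) - b*(d*i - f*g) + c*(d*h - e*g).
Definition det4 (a11 a12 a13 a14 a21 a22 a23 a24 a31 a32 a33 a34 a41 a42 a43 a44 : R) :=
  a11 * det3 a22 a23 a24 a32 a33 a34 a42 a43 a44
- a12 * det3 a21 a23 a24 a31 a33 a34 a41 a43 a44
+ a13 * det3 a21 a22 a24 a31 a32 a34 a41 a42 a44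
- a14 * det3 a21 a22 a23 a31 a32 a33 a41 a42 a43.
Lemma Qv_sym x1 y1 a1 b1 x2 y2 a2 b2 : Qv x1 y1 a1 b1 x2 y2 a2 b2 = Qv x2 y2 a2 b2 x1 y1 a1 b1.
Proof. unfold Qv; field. Qed.

Lemma cb x1 y1 a1 b1 x2 y2 a2 b2 x3 y3 a3 b3 x4 y4 a4 b4 :
  det4 (Qv x1 y1 a1 b1 x1 y1 a1 b1) (Qv x1 y1 a1 b1 x2 y2 a2 b2) (Qv x1 y1 a1 b1 x3 y3 a3 b3) (Qv x1 y1 a1 b1 x4 y4 a4 b4) (Qv x2 y2 a2 b2 x1 y1 a1 b1) (Qv x2 y2 a2 b2 x2 y2 a2 b2) (Qv x2 y2 a2 b2 x3 y3 a3 b3) (Qv x2 y2 a2 b2 x4 y4 a4 b4) (Qv x3 y3 a3 b3 x1 y1 a1 b1) (Qv x3 y3 a3 b3 x2 y2 a2 b2) (Qv x3 y3 a3 b3 x3 y3 a3 b3) (Qv x3 y3 a3 b3 x4 y4 a4 b4) (Qv x4 y4 a4 b4 x1 y1 a1 b1) (Qv x4 y4 a4 b4 x2 y2 a2 b2) (Qv x4 y4 a4 b4 x3 y3 a3 b3) (Qv x4 y4 a4 b4 x4 y4 a4 b4) = - (1/4) * (det4 x1 y1 a1 b1 x2 y2 a2 b2 x3 y3 a3 b3 x4 y4 a4 b4)^2.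
Proof. unfold det4, det3, Qv. field. Qed.

Lemma Lker x1 y1 a1 b1 x2 y2 a2 b2 x3 y3 a3 b3 x4 y4 a4 b4 rx ry ra rb :
  det4 x1 y1 a1 b1 x2 y2 a2 b2 x3 y3 a3 b3 x4 y4 a4 b4 <> 0 ->
  Qv x1 y1 a1 b1 rx ry ra rb = 0 -> Qv x2 y2 a2 b2 rx ry ra rb = 0 -> Qv x3 y3 a3 b3 rx ry ra rb = 0 -> Qv x4 y4 a4 b4 rx ry ra rb = 0 ->
  rx = 0 /\ ry = 0 /\ ra = 0 /\ rb = 0.
Proof.
  intros Hd H1 H2 H3 H4.
  assert (C0 : det4 x1 y1 a1 b1 x2 y2 a2 b2 x3 y3 a3 b3 x4 y4 a4 b4 * rx = det4 (Qv x1 y1 a1 b1 rx ry ra rb) y1 a1 b1 (Qv x2 y2 a2 b2 rx ry ra rb) y2 a2 b2 (Qv x3 y3 a3 b3 rx ry ra rb) y3 a3 b3 (Qv x4 y4 a4 b4 rx ry ra rb) y4 a4 b4) by (unfold det4, det3, Qv; field).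
  rewrite H1, H2, H3, H4 in C0.
  assert (Z0 : det4 0 y1 a1 b1 0 y2 a2 b2 0 y3 a3 b3 0 y4 a4 b4 = 0) by (unfold det4, det3; ring).
  rewrite Z0 in C0.
  apply Rmult_integral in C0. destruct C0 as [C0|C0]; [contradiction|].
  assert (C1 : det4 x1 y1 a1 b1 x2 y2 a2 b2 x3 y3 a3 b3 x4 y4 a4 b4 * ry = det4 x1 (Qv x1 y1 a1 b1 rx ry ra rb) a1 b1 x2 (Qv x2 y2 a2 b2 rx ry ra rb) a2 b2 x3 (Qv x3 y3 a3 b3 rx ry ra rb) a3 b3 x4 (Qv x4 y4 a4 b4 rx ry ra rb) a4 b4) by (unfold det4, det3, Qv; field).
  rewrite H1, H2, H3, H4 in C1.
  assert (Z1 : det4 x1 0 a1 b1 x2 0 a2 b2 x3 0 a3 b3 x4 0 a4 b4 = 0) by (unfold det4, det3; ring).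
  rewrite Z1 in C1.
  apply Rmult_integral in C1. destruct C1 as [C1|C1]; [contradiction|].
  assert (C2 : det4 x1 y1 a1 b1 x2 y2 a2 b2 x3 y3 a3 b3 x4 y4 a4 b4 * (-rb/2) = det4 x1 y1 (Qv x1 y1 a1 b1 rx ry ra rb) b1 x2 y2 (Qv x2 y2 a2 b2 rx ry ra rb) b2 x3 y3 (Qv x3 y3 a3 b3 rx ry ra rb) b3 x4 y4 (Qv x4 y4 a4 b4 rx ry ra rb) b4) by (unfold det4, det3, Qv; field).
  rewrite H1, H2, H3, H4 in C2.
  assert (Z2 : det4 x1 y1 0 b1 x2 y2 0 b2 x3 y3 0 b3 x4 y4 0 b4 = 0) by (unfold det4, det3; ring).
  rewrite Z2 in C2.
  apply Rmult_integral in C2. destruct C2 as [C2|C2]; [contradiction|].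
  assert (C3 : det4 x1 y1 a1 b1 x2 y2 a2 b2 x3 y3 a3 b3 x4 y4 a4 b4 * (-ra/2) = det4 x1 y1 a1 (Qv x1 y1 a1 b1 rx ry ra rb) x2 y2 a2 (Qv x2 y2 a2 b2 rx ry ra rb) x3 y3 a3 (Qv x3 y3 a3 b3 rx ry ra rb) x4 y4 a4 (Qv x4 y4 a4 b4 rx ry ra rb)) by (unfold det4, det3, Qv; field).
  rewrite H1, H2, H3, H4 in C3.
  assert (Z3 : det4 x1 y1 a1 0 x2 y2 a2 0 x3 y3 a3 0 x4 y4 a4 0 = 0) by (unfold det4, det3; ring).
  rewrite Z3 in C3.
  apply Rmult_integral in C3. destruct C3 as [C3|C3]; [contradiction|].
  repeat split; lra.
Qed.

Lemma SL x1 y1 a1 b1 x2 y2 a2 b2 x3 y3 a3 b3 x4 y4 a4 b4 ux uy ua ub p1 p2 p3 p4 :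
  Qv x1 y1 a1 b1 x1 y1 a1 b1 = 1 ->
  Qv x1 y1 a1 b1 x2 y2 a2 b2 = -1 ->
  Qv x1 y1 a1 b1 x3 y3 a3 b3 = -1 ->
  Qv x1 y1 a1 b1 x4 y4 a4 b4 = -1 ->
  Qv x2 y2 a2 b2 x2 y2 a2 b2 = 1 ->
  Qv x2 y2 a2 b2 x3 y3 a3 b3 = -1 ->
  Qv x2 y2 a2 b2 x4 y4 a4 b4 = -1 ->
  Qv x3 y3 a3 b3 x3 y3 a3 b3 = 1 ->
  Qv x3 y3 a3 b3 x4 y4 a4 b4 = -1 ->
  Qv x4 y4 a4 b4 x4 y4 a4 b4 = 1 ->
  Qv x1 y1 a1 b1 ux uy ua ub = p1 -> Qv x2 y2 a2 b2 ux uy ua ub = p2 -> Qv x3 y3 a3 b3 ux uy ua ub = p3 -> Qv x4 y4 a4 b4 ux uy ua ub = p4 ->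
  ux = (p1/2 - (p1+p2+p3+p4)/4)*x1 + (p2/2 - (p1+p2+p3+p4)/4)*x2 + (p3/2 - (p1+p2+p3+p4)/4)*x3 + (p4/2 - (p1+p2+p3+p4)/4)*x4 /\ uy = (p1/2 - (p1+p2+p3+p4)/4)*y1 + (p2/2 - (p1+p2+p3+p4)/4)*y2 + (p3/2 - (p1+p2+p3+p4)/4)*y3 + (p4/2 - (p1+p2+p3+p4)/4)*y4 /\ ua = (p1/2 - (p1+p2+p3+p4)/4)*a1 + (p2/2 - (p1+p2+p3+p4)/4)*a2 + (p3/2 - (p1+p2+p3+p4)/4)*a3 + (p4/2 - (p1+p2+p3+p4)/4)*a4 /\ ub = (p1/2 - (p1+p2+p3+p4)/4)*b1 + (p2/2 - (p1+p2+p3+p4)/4)*b2 + (p3/2 - (p1+p2+p3+p4)/4)*b3 + (p4/2 - (p1+p2+p3+p4)/4)*b4.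
Proof.
  intros G11 G12 G13 G14 G22 G23 G24 G33 G34 G44 P1 P2 P3 P4.
  assert (Hdet : det4 x1 y1 a1 b1 x2 y2 a2 b2 x3 y3 a3 b3 x4 y4 a4 b4 <> 0).
  { pose proof (cb x1 y1 a1 b1 x2 y2 a2 b2 x3 y3 a3 b3 x4 y4 a4 b4) as H.
    rewrite (Qv_sym x2 y2 a2 b2 x1 y1 a1 b1) in H.
    rewrite (Qv_sym x3 y3 a3 b3 x1 y1 a1 b1) in H.
    rewrite (Qv_sym x3 y3 a3 b3 x2 y2 a2 b2) in H.
    rewrite (Qv_sym x4 y4 a4 b4 x1 y1 a1 b1) in H.
    rewrite (Qv_sym x4 y4 a4 b4 x2 y2 a2 b2) in H.
    rewrite (Qv_sym x4 y4 a4 b4 x3 y3 a3 b3) in H.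
    rewrite G11 in H.
    rewrite G12 in H.
    rewrite G13 in H.
    rewrite G14 in H.
    rewrite G22 in H.
    rewrite G23 in H.
    rewrite G24 in H.
    rewrite G33 in H.
    rewrite G34 in H.
    rewrite G44 in H.
    unfold det4 at 1, det3 in H. intro Hz. rewrite Hz in H. lra. }
  set (rx := ux - ((p1/2 - (p1+p2+p3+p4)/4)*x1 + (p2/2 - (p1+p2+p3+p4)/4)*x2 + (p3/2 - (p1+p2+p3+p4)/4)*x3 + (p4/2 - (p1+p2+p3+p4)/4)*x4)).
  set (ry := uy - ((p1/2 - (p1+p2+p3+p4)/4)*y1 + (p2/2 - (p1+p2+p3+p4)/4)*y2 + (p3/2 - (p1+p2+p3+p4)/4)*y3 + (p4/2 - (p1+p2+p3+p4)/4)*y4)).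
  set (ra := ua - ((p1/2 - (p1+p2+p3+p4)/4)*a1 + (p2/2 - (p1+p2+p3+p4)/4)*a2 + (p3/2 - (p1+p2+p3+p4)/4)*a3 + (p4/2 - (p1+p2+p3+p4)/4)*a4)).
  set (rb := ub - ((p1/2 - (p1+p2+p3+p4)/4)*b1 + (p2/2 - (p1+p2+p3+p4)/4)*b2 + (p3/2 - (p1+p2+p3+p4)/4)*b3 + (p4/2 - (p1+p2+p3+p4)/4)*b4)).
  assert (K1 : Qv x1 y1 a1 b1 rx ry ra rb = 0).
  { assert (E : Qv x1 y1 a1 b1 rx ry ra rb = Qv x1 y1 a1 b1 ux uy ua ub - ((p1/2 - (p1+p2+p3+p4)/4) * Qv x1 y1 a1 b1 x1 y1 a1 b1 + (p2/2 - (p1+p2+p3+p4)/4) * Qv x1 y1 a1 b1 x2 y2 a2 b2 + (p3/2 - (p1+p2+p3+p4)/4) * Qv x1 y1 a1 b1 x3 y3 a3 b3 + (p4/2 - (p1+p2+p3+p4)/4) * Qv x1 y1 a1 b1 x4 y4 a4 b4)) by (unfold rx, ry, ra, rb, Qv; field).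
    rewrite E, P1.
    rewrite G11.
    rewrite G12.
    rewrite G13.
    rewrite G14.
    field. }
  assert (K2 : Qv x2 y2 a2 b2 rx ry ra rb = 0).
  { assert (E : Qv x2 y2 a2 b2 rx ry ra rb = Qv x2 y2 a2 b2 ux uy ua ub - ((p1/2 - (p1+p2+p3+p4)/4) * Qv x2 y2 a2 b2 x1 y1 a1 b1 + (p2/2 - (p1+p2+p3+p4)/4) * Qv x2 y2 a2 b2 x2 y2 a2 b2 + (p3/2 - (p1+p2+p3+p4)/4) * Qv x2 y2 a2 b2 x3 y3 a3 b3 + (p4/2 - (p1+p2+p3+p4)/4) * Qv x2 y2 a2 b2 x4 y4 a4 b4)) by (unfold rx, ry, ra, rb, Qv; field).
    rewrite E, P2.
    rewrite (Qv_sym x2 y2 a2 b2 x1 y1 a1 b1).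
    rewrite G12.
    rewrite G22.
    rewrite G23.
    rewrite G24.
    field. }
  assert (K3 : Qv x3 y3 a3 b3 rx ry ra rb = 0).
  { assert (E : Qv x3 y3 a3 b3 rx ry ra rb = Qv x3 y3 a3 b3 ux uy ua ub - ((p1/2 - (p1+p2+p3+p4)/4) * Qv x3 y3 a3 b3 x1 y1 a1 b1 + (p2/2 - (p1+p2+p3+p4)/4) * Qv x3 y3 a3 b3 x2 y2 a2 b2 + (p3/2 - (p1+p2+p3+p4)/4) * Qv x3 y3 a3 b3 x3 y3 a3 b3 + (p4/2 - (p1+p2+p3+p4)/4) * Qv x3 y3 a3 b3 x4 y4 a4 b4)) by (unfold rx, ry, ra, rb, Qv; field).
    rewrite E, P3.
    rewrite (Qv_sym x3 y3 a3 b3 x1 y1 a1 b1).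
    rewrite (Qv_sym x3 y3 a3 b3 x2 y2 a2 b2).
    rewrite G13.
    rewrite G23.
    rewrite G33.
    rewrite G34.
    field. }
  assert (K4 : Qv x4 y4 a4 b4 rx ry ra rb = 0).
  { assert (E : Qv x4 y4 a4 b4 rx ry ra rb = Qv x4 y4 a4 b4 ux uy ua ub - ((p1/2 - (p1+p2+p3+p4)/4) * Qv x4 y4 a4 b4 x1 y1 a1 b1 + (p2/2 - (p1+p2+p3+p4)/4) * Qv x4 y4 a4 b4 x2 y2 a2 b2 + (p3/2 - (p1+p2+p3+p4)/4) * Qv x4 y4 a4 b4 x3 y3 a3 b3 + (p4/2 - (p1+p2+p3+p4)/4) * Qv x4 y4 a4 b4 x4 y4 a4 b4)) by (unfold rx, ry, ra, rb, Qv; field).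
    rewrite E, P4.
    rewrite (Qv_sym x4 y4 a4 b4 x1 y1 a1 b1).
    rewrite (Qv_sym x4 y4 a4 b4 x2 y2 a2 b2).
    rewrite (Qv_sym x4 y4 a4 b4 x3 y3 a3 b3).
    rewrite G14.
    rewrite G24.
    rewrite G34.
    rewrite G44.
    field. }
  destruct (Lker x1 y1 a1 b1 x2 y2 a2 b2 x3 y3 a3 b3 x4 y4 a4 b4 rx ry ra rb Hdet K1 K2 K3 K4) as [R1 [R2 [R3 R4]]].
  unfold rx, ry, ra, rb in *. repeat split; lra.
Qed.

Lemma BIL x1 y1 a1 b1 x2 y2 a2 b2 x3 y3 a3 b3 x4 y4 a4 b4 ux uy ua ub vx vy va vb p1 p2 p3 p4 q1 q2 q3 q4 :
  Qv x1 y1 a1 b1 x1 y1 a1 b1 = 1 ->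
  Qv x1 y1 a1 b1 x2 y2 a2 b2 = -1 ->
  Qv x1 y1 a1 b1 x3 y3 a3 b3 = -1 ->
  Qv x1 y1 a1 b1 x4 y4 a4 b4 = -1 ->
  Qv x2 y2 a2 b2 x2 y2 a2 b2 = 1 ->
  Qv x2 y2 a2 b2 x3 y3 a3 b3 = -1 ->
  Qv x2 y2 a2 b2 x4 y4 a4 b4 = -1 ->
  Qv x3 y3 a3 b3 x3 y3 a3 b3 = 1 ->
  Qv x3 y3 a3 b3 x4 y4 a4 b4 = -1 ->
  Qv x4 y4 a4 b4 x4 y4 a4 b4 = 1 ->
  Qv x1 y1 a1 b1 ux uy ua ub = p1 -> Qv x2 y2 a2 b2 ux uy ua ub = p2 -> Qv x3 y3 a3 b3 ux uy ua ub = p3 -> Qv x4 y4 a4 b4 ux uy ua ub = p4 ->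
  Qv x1 y1 a1 b1 vx vy va vb = q1 -> Qv x2 y2 a2 b2 vx vy va vb = q2 -> Qv x3 y3 a3 b3 vx vy va vb = q3 -> Qv x4 y4 a4 b4 vx vy va vb = q4 ->
  2 * Qv ux uy ua ub vx vy va vb = p1*q1 + p2*q2 + p3*q3 + p4*q4 - (p1+p2+p3+p4)*(q1+q2+q3+q4)/2.
Proof.
  intros G11 G12 G13 G14 G22 G23 G24 G33 G34 G44 P1 P2 P3 P4 Q1 Q2 Q3 Q4.
  destruct (SL x1 y1 a1 b1 x2 y2 a2 b2 x3 y3 a3 b3 x4 y4 a4 b4 ux uy ua ub p1 p2 p3 p4 G11 G12 G13 G14 G22 G23 G24 G33 G34 G44 P1 P2 P3 P4) as [Hx [Hy [Ha Hb]]].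
  rewrite Hx, Hy, Ha, Hb.
  assert (E : Qv ((p1/2 - (p1+p2+p3+p4)/4)*x1 + (p2/2 - (p1+p2+p3+p4)/4)*x2 + (p3/2 - (p1+p2+p3+p4)/4)*x3 + (p4/2 - (p1+p2+p3+p4)/4)*x4) ((p1/2 - (p1+p2+p3+p4)/4)*y1 + (p2/2 - (p1+p2+p3+p4)/4)*y2 + (p3/2 - (p1+p2+p3+p4)/4)*y3 + (p4/2 - (p1+p2+p3+p4)/4)*y4) ((p1/2 - (p1+p2+p3+p4)/4)*a1 + (p2/2 - (p1+p2+p3+p4)/4)*a2 + (p3/2 - (p1+p2+p3+p4)/4)*a3 + (p4/2 - (p1+p2+p3+p4)/4)*a4) ((p1/2 - (p1+p2+p3+p4)/4)*b1 + (p2/2 - (p1+p2+p3+p4)/4)*b2 + (p3/2 - (p1+p2+p3+p4)/4)*b3 + (p4/2 - (p1+p2+p3+p4)/4)*b4) vx vy va vb =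
     (p1/2 - (p1+p2+p3+p4)/4) * Qv x1 y1 a1 b1 vx vy va vb + (p2/2 - (p1+p2+p3+p4)/4) * Qv x2 y2 a2 b2 vx vy va vb + (p3/2 - (p1+p2+p3+p4)/4) * Qv x3 y3 a3 b3 vx vy va vb + (p4/2 - (p1+p2+p3+p4)/4) * Qv x4 y4 a4 b4 vx vy va vb) by (unfold Qv; field).
  rewrite E, Q1, Q2, Q3, Q4. field.
Qed.

Lemma F3 x1 y1 a1 b1 x2 y2 a2 b2 x3 y3 a3 b3 x4 y4 a4 b4 sx sy sa :
  Qv x1 y1 a1 b1 x1 y1 a1 b1 = 1 ->
  Qv x1 y1 a1 b1 x2 y2 a2 b2 = -1 ->
  Qv x1 y1 a1 b1 x3 y3 a3 b3 = -1 ->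
  Qv x1 y1 a1 b1 x4 y4 a4 b4 = -1 ->
  Qv x2 y2 a2 b2 x2 y2 a2 b2 = 1 ->
  Qv x2 y2 a2 b2 x3 y3 a3 b3 = -1 ->
  Qv x2 y2 a2 b2 x4 y4 a4 b4 = -1 ->
  Qv x3 y3 a3 b3 x3 y3 a3 b3 = 1 ->
  Qv x3 y3 a3 b3 x4 y4 a4 b4 = -1 ->
  Qv x4 y4 a4 b4 x4 y4 a4 b4 = 1 ->
  ((sa*x1 - a1*sx)^2 - (sa*y1 - a1*sy)^2)+((sa*x2 - a2*sx)^2 - (sa*y2 - a2*sy)^2)+((sa*x3 - a3*sx)^2 - (sa*y3 - a3*sy)^2)+((sa*x4 - a4*sx)^2 - (sa*y4 - a4*sy)^2) - (((sa*x1 - a1*sx)+(sa*x2 - a2*sx)+(sa*x3 - a3*sx)+(sa*x4 - a4*sx))^2 - ((sa*y1 - a1*sy)+(sa*y2 - a2*sy)+(sa*y3 - a3*sy)+(sa*y4 - a4*sy))^2)/2 = 0 /\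
  (sa*x1 - a1*sx)*(sa*y1 - a1*sy)+(sa*x2 - a2*sx)*(sa*y2 - a2*sy)+(sa*x3 - a3*sx)*(sa*y3 - a3*sy)+(sa*x4 - a4*sx)*(sa*y4 - a4*sy) - ((sa*x1 - a1*sx)+(sa*x2 - a2*sx)+(sa*x3 - a3*sx)+(sa*x4 - a4*sx))*((sa*y1 - a1*sy)+(sa*y2 - a2*sy)+(sa*y3 - a3*sy)+(sa*y4 - a4*sy))/2 = 0.
Proof.
  intros G11 G12 G13 G14 G22 G23 G24 G33 G34 G44.
  assert (Ur1 : Qv x1 y1 a1 b1 sa 0 0 (2*sx) = (sa*x1 - a1*sx)) by (unfold Qv; field).
  assert (Ur2 : Qv x2 y2 a2 b2 sa 0 0 (2*sx) = (sa*x2 - a2*sx)) by (unfold Qv; field).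
  assert (Ur3 : Qv x3 y3 a3 b3 sa 0 0 (2*sx) = (sa*x3 - a3*sx)) by (unfold Qv; field).
  assert (Ur4 : Qv x4 y4 a4 b4 sa 0 0 (2*sx) = (sa*x4 - a4*sx)) by (unfold Qv; field).
  assert (Ui1 : Qv x1 y1 a1 b1 0 sa 0 (2*sy) = (sa*y1 - a1*sy)) by (unfold Qv; field).
  assert (Ui2 : Qv x2 y2 a2 b2 0 sa 0 (2*sy) = (sa*y2 - a2*sy)) by (unfold Qv; field).
  assert (Ui3 : Qv x3 y3 a3 b3 0 sa 0 (2*sy) = (sa*y3 - a3*sy)) by (unfold Qv; field).
  assert (Ui4 : Qv x4 y4 a4 b4 0 sa 0 (2*sy) = (sa*y4 - a4*sy)) by (unfold Qv; field).
  pose proof (BIL x1 y1 a1 b1 x2 y2 a2 b2 x3 y3 a3 b3 x4 y4 a4 b4 sa 0 0 (2*sx) sa 0 0 (2*sx) _ _ _ _ _ _ _ _ G11 G12 G13 G14 G22 G23 G24 G33 G34 G44 Ur1 Ur2 Ur3 Ur4 Ur1 Ur2 Ur3 Ur4) as B1.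
  pose proof (BIL x1 y1 a1 b1 x2 y2 a2 b2 x3 y3 a3 b3 x4 y4 a4 b4 0 sa 0 (2*sy) 0 sa 0 (2*sy) _ _ _ _ _ _ _ _ G11 G12 G13 G14 G22 G23 G24 G33 G34 G44 Ui1 Ui2 Ui3 Ui4 Ui1 Ui2 Ui3 Ui4) as B2.
  pose proof (BIL x1 y1 a1 b1 x2 y2 a2 b2 x3 y3 a3 b3 x4 y4 a4 b4 sa 0 0 (2*sx) 0 sa 0 (2*sy) _ _ _ _ _ _ _ _ G11 G12 G13 G14 G22 G23 G24 G33 G34 G44 Ur1 Ur2 Ur3 Ur4 Ui1 Ui2 Ui3 Ui4) as B3.
  unfold Qv at 1 in B1. unfold Qv at 1 in B2. unfold Qv at 1 in B3.
  split; nra.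
Qed.

Lemma F1core x1 y1 a1 b1 x2 y2 a2 b2 x3 y3 a3 b3 x4 y4 a4 b4 ux uy ua ub :
  Qv x1 y1 a1 b1 x1 y1 a1 b1 = 1 ->
  Qv x1 y1 a1 b1 x2 y2 a2 b2 = -1 ->
  Qv x1 y1 a1 b1 x3 y3 a3 b3 = -1 ->
  Qv x1 y1 a1 b1 x4 y4 a4 b4 = -1 ->
  Qv x2 y2 a2 b2 x2 y2 a2 b2 = 1 ->
  Qv x2 y2 a2 b2 x3 y3 a3 b3 = -1 ->
  Qv x2 y2 a2 b2 x4 y4 a4 b4 = -1 ->
  Qv x3 y3 a3 b3 x3 y3 a3 b3 = 1 ->
  Qv x3 y3 a3 b3 x4 y4 a4 b4 = -1 ->
  Qv x4 y4 a4 b4 x4 y4 a4 b4 = 1 ->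
  Qv x1 y1 a1 b1 ux uy ua ub = -1 -> Qv x2 y2 a2 b2 ux uy ua ub = -1 -> Qv x3 y3 a3 b3 ux uy ua ub = -1 ->
  Qv ux uy ua ub ux uy ua ub = 1 ->
  (ux = x4 /\ uy = y4 /\ ua = a4 /\ ub = b4) \/
  (ux = 2*(x1+x2+x3) - x4 /\ uy = 2*(y1+y2+y3) - y4 /\ ua = 2*(a1+a2+a3) - a4 /\ ub = 2*(b1+b2+b3) - b4).
Proof.
  intros G11 G12 G13 G14 G22 G23 G24 G33 G34 G44 H1 H2 H3 HU.
  remember (Qv x4 y4 a4 b4 ux uy ua ub) as k eqn:H4. symmetry in H4.
  pose proof (BIL x1 y1 a1 b1 x2 y2 a2 b2 x3 y3 a3 b3 x4 y4 a4 b4 ux uy ua ub ux uy ua ub _ _ _ _ _ _ _ _ G11 G12 G13 G14 G22 G23 G24 G33 G34 G44 H1 H2 H3 H4 H1 H2 H3 H4) as B.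
  rewrite HU in B.
  destruct (SL x1 y1 a1 b1 x2 y2 a2 b2 x3 y3 a3 b3 x4 y4 a4 b4 ux uy ua ub _ _ _ _ G11 G12 G13 G14 G22 G23 G24 G33 G34 G44 H1 H2 H3 H4) as [Hx [Hy [Ha Hb]]].
  assert (Hk : (k - 1)*(k + 7) = 0) by nra.
  apply Rmult_integral in Hk. destruct Hk as [Hk|Hk].
  - left. assert (Hk1 : k = 1) by lra. rewrite Hk1 in Hx, Hy, Ha, Hb. rewrite Hx, Hy, Ha, Hb. repeat split; field.
  - right. assert (Hk1 : k = -7) by lra. rewrite Hk1 in Hx, Hy, Ha, Hb. rewrite Hx, Hy, Ha, Hb. repeat split; field.
Qed.

Definition DescR Xr Xi Yr Yi Zr Zi := (Xr^2-Xi^2)+(Yr^2-Yi^2)+(Zr^2-Zi^2) - 2*((Xr*Yr-Xi*Yi)+(Xr*Zr-Xi*Zi)+(Yr*Zr-Yi*Zi)).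
Definition DescI Xr Xi Yr Yi Zr Zi := (Xr*Xi+Yr*Yi+Zr*Zi) - ((Xr*Yi+Xi*Yr)+(Xr*Zi+Xi*Zr)+(Yr*Zi+Yi*Zr)).
Definition gauss re im := exists a b : Z, IZR a ^ 2 - IZR b ^ 2 = re /\ 2 * IZR a * IZR b = im.

Lemma cmul0 ar ai br bi : ar*br - ai*bi = 0 -> ar*bi + ai*br = 0 ->
  (ar = 0 /\ ai = 0) \/ (br = 0 /\ bi = 0).
Proof.
  intros H1 H2.
  assert (E : (ar^2+ai^2)*(br^2+bi^2) = (ar*br - ai*bi)^2 + (ar*bi + ai*br)^2) by ring.
  rewrite H1, H2 in E.
  assert (E0 : (ar^2+ai^2)*(br^2+bi^2) = 0) by lra.
  apply Rmult_integral in E0. destruct E0 as [E0|E0]; [left|right]; split; nra.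
Qed.

Lemma gauss_neg re im : gauss re im -> gauss (-re) (-im).
Proof.
  intros [a [b [H1 H2]]]. exists (-b)%Z, a. rewrite opp_IZR. split; nra.
Qed.

Lemma G4 Xr Xi Yr Yi Zr Zi :
  gauss Xr Xi -> gauss Yr Yi -> gauss Zr Zi ->
  DescR Xr Xi Yr Yi Zr Zi = 0 -> DescI Xr Xi Yr Yi Zr Zi = 0 ->
  gauss (2*Xr+2*Yr-Zr) (2*Xi+2*Yi-Zi).
Proof.
  intros [u1 [u2 [U1 U2]]] [v1 [v2 [V1 V2]]] [t1 [t2 [T1 T2]]] DR DI.
  subst Xr Xi Yr Yi Zr Zi.
  set (U1r := IZR u1) in *. set (U2r := IZR u2) in *. set (V1r := IZR v1) in *.
  set (V2r := IZR v2) in *. set (T1r := IZR t1) in *. set (T2r := IZR t2) in *.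
  set (f1r := T1r - U1r - V1r). set (f1i := T2r - U2r - V2r).
  set (f2r := T1r - U1r + V1r). set (f2i := T2r - U2r + V2r).
  set (f3r := T1r + U1r - V1r). set (f3i := T2r + U2r - V2r).
  set (f4r := T1r + U1r + V1r). set (f4i := T2r + U2r + V2r).
  set (P1r := f1r*f2r - f1i*f2i). set (P1i := f1r*f2i + f1i*f2r).
  set (P2r := f3r*f4r - f3i*f4i). set (P2i := f3r*f4i + f3i*f4r).
  assert (E1 : P1r*P2r - P1i*P2i = 0).
  { rewrite <- DR. unfold P1r, P1i, P2r, P2i, f1r, f1i, f2r, f2i, f3r, f3i, f4r, f4i, DescR. ring. }
  assert (E2 : P1r*P2i + P1i*P2r = 0).
  { replace 0 with (2 * DescI (U1r ^ 2 - U2r ^ 2) (2 * U1r * U2r) (V1r ^ 2 - V2r ^ 2) (2 * V1r * V2r)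
       (T1r ^ 2 - T2r ^ 2) (2 * T1r * T2r)) by (rewrite DI; ring).
    unfold P1r, P1i, P2r, P2i, f1r, f1i, f2r, f2i, f3r, f3i, f4r, f4i, DescI. ring. }
  (* candidates: t = s1 u + s2 v, witness u - s1 s2 v *)
  assert (W : forall s : Z, (s = 1 \/ s = -1)%Z ->
     (T1r = U1r + IZR s * V1r /\ T2r = U2r + IZR s * V2r) \/ (T1r = - U1r - IZR s * V1r /\ T2r = - U2r - IZR s * V2r) ->
     gauss (2 * (U1r ^ 2 - U2r ^ 2) + 2 * (V1r ^ 2 - V2r ^ 2) - (T1r ^ 2 - T2r ^ 2))
           (2 * (2 * U1r * U2r) + 2 * (2 * V1r * V2r) - 2 * T1r * T2r)).
  { intros s Hs Ht. exists (u1 - s*v1)%Z, (u2 - s*v2)%Z. rewrite !minus_IZR, !mult_IZR.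
    fold U1r U2r V1r V2r.
    assert (Hs2 : IZR s ^ 2 = 1) by (destruct Hs as [-> | ->]; simpl; ring).
    destruct Ht as [[-> ->]|[-> ->]]; split; ring_simplify; rewrite ?Hs2; ring_simplify; try rewrite Hs2; ring. }
  destruct (cmul0 _ _ _ _ E1 E2) as [[Q1 Q2]|[Q1 Q2]].
  - destruct (cmul0 _ _ _ _ Q1 Q2) as [[R1 R2]|[R1 R2]].
    + unfold f1r, f1i in R1, R2. apply (W 1%Z); [auto|]. left; split; simpl; lra.
    + unfold f2r, f2i in R1, R2. apply (W (-1)%Z); [auto|]. left; split; simpl; lra.
  - unfold P2r, P2i in Q1, Q2. destruct (cmul0 _ _ _ _ Q1 Q2) as [[R1 R2]|[R1 R2]].
    + unfold f3r, f3i in R1, R2. apply (W (-1)%Z); [auto|]. right; split; simpl; lra.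
    + unfold f4r, f4i in R1, R2. apply (W 1%Z); [auto|]. right; split; simpl; lra.
Qed.


Lemma F2 x1 y1 a1 b1 x2 y2 a2 b2 x3 y3 a3 b3 :
  Qv x1 y1 a1 b1 x1 y1 a1 b1 = 1 -> Qv x2 y2 a2 b2 x2 y2 a2 b2 = 1 -> Qv x3 y3 a3 b3 x3 y3 a3 b3 = 1 ->
  Qv x1 y1 a1 b1 x2 y2 a2 b2 = -1 -> Qv x1 y1 a1 b1 x3 y3 a3 b3 = -1 -> Qv x2 y2 a2 b2 x3 y3 a3 b3 = -1 ->
  DescR (a2*x1 - a1*x2) (a2*y1 - a1*y2) (a1*x3 - a3*x1) (a1*y3 - a3*y1) (a3*x2 - a2*x3) (a3*y2 - a2*y3) = 0 /\
  DescI (a2*x1 - a1*x2) (a2*y1 - a1*y2) (a1*x3 - a3*x1) (a1*y3 - a3*y1) (a3*x2 - a2*x3) (a3*y2 - a2*y3) = 0.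
Proof.
  intros Q11 Q22 Q33 Q12 Q13 Q23.
  assert (NN : (x2+x3)^2 + (y2+y3)^2 - (a2+a3)*(b2+b3) = 0).
  { replace 0 with (Qv x2 y2 a2 b2 x2 y2 a2 b2 + 2*Qv x2 y2 a2 b2 x3 y3 a3 b3 + Qv x3 y3 a3 b3 x3 y3 a3 b3)
      by (rewrite Q22, Q23, Q33; ring). unfold Qv; field. }
  destruct (Req_dec (a2+a3) 0) as [Hm|Hm].
  - assert (E : (x2+x3)^2 + (y2+y3)^2 = 0) by (rewrite Hm in NN; lra).
    pose proof (pow2_ge_0 (x2+x3)); pose proof (pow2_ge_0 (y2+y3)).
    assert (Ex2 : (x2+x3)^2 = 0) by lra. assert (Ey2 : (y2+y3)^2 = 0) by lra.
    assert (Ex3 : x2+x3 = 0) by (destruct (Req_dec (x2+x3) 0) as [h|h]; [exact h| exfalso; apply (pow_nonzero _ 2 h); exact Ex2]).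
    assert (Ey3 : y2+y3 = 0) by (destruct (Req_dec (y2+y3) 0) as [h|h]; [exact h| exfalso; apply (pow_nonzero _ 2 h); exact Ey2]).
    assert (Ex : x3 = -x2) by lra. assert (Ey : y3 = -y2) by lra. assert (Ea : a3 = -a2) by lra.
    subst x3 y3 a3. unfold DescR, DescI; split; ring.
  - remember (a2+a3) as m eqn:Em. assert (Ea : a3 = m - a2) by lra. subst a3.
    assert (Epx : exists px, x3 = m*px - x2) by (exists ((x2+x3)/m); field; auto). destruct Epx as [px Hx]. subst x3.
    assert (Epy : exists py, y3 = m*py - y2) by (exists ((y2+y3)/m); field; auto). destruct Epy as [py Hy]. subst y3.
    assert (Eb : b3 = m*(px^2+py^2) - b2).
    { apply (Rmult_eq_reg_l m); auto. replace (m*b3) with (m*(b2+b3) - m*b2) by ring.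
      replace (m*(b2+b3)) with ((m*px - x2 + x2)^2 + (m*py - y2 + y2)^2) by lra. ring. }
    subst b3. clear NN Em.
    set (fA := a1*(px^2+py^2) - 2*(x1*px + y1*py) + b1).
    set (fB := a2*(px^2+py^2) - 2*(x2*px + y2*py) + b2).
    assert (HfB : m*fB = 0).
    { assert (E : Qv x2 y2 a2 b2 (m*px - x2) (m*py - y2) (m - a2) (m*(px^2+py^2) - b2) =
                  -(m*fB)/2 - Qv x2 y2 a2 b2 x2 y2 a2 b2) by (unfold fB, Qv; field).
      rewrite Q23, Q22 in E. lra. }
    assert (HfA : m*fA = 4).
    { assert (E : Qv x1 y1 a1 b1 (m*px - x2) (m*py - y2) (m - a2) (m*(px^2+py^2) - b2) =
                  -(m*fA)/2 - Qv x1 y1 a1 b1 x2 y2 a2 b2) by (unfold fA, Qv; field).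
      rewrite Q13, Q12 in E. lra. }
    assert (fB0 : fB = 0).
    { apply Rmult_integral in HfB. destruct HfB; auto. contradiction. }
    set (ex := a2*px - x2). set (ey := a2*py - y2). set (gx := a1*px - x1). set (gy := a1*py - y1).
    assert (H3 : 1 - (ex^2+ey^2) = 0).
    { assert (E : ex^2+ey^2 = a2*fB + Qv x2 y2 a2 b2 x2 y2 a2 b2) by (unfold ex, ey, fB, Qv; field).
      rewrite E, fB0, Q22. ring. }
    assert (H1 : m + 4*a1 - m*(gx^2+gy^2) = 0).
    { assert (E : gx^2+gy^2 = a1*fA + Qv x1 y1 a1 b1 x1 y1 a1 b1) by (unfold gx, gy, fA, Qv; field).
      rewrite E, Q11. replace (m*(a1*fA+1)) with (a1*(m*fA) + m) by ring. rewrite HfA. ring. }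
    assert (H2 : (2*m - 4*a2) + 2*m*(gx*ex+gy*ey) = 0).
    { assert (E : gx*ex+gy*ey = (a2*fA + a1*fB)/2 + Qv x1 y1 a1 b1 x2 y2 a2 b2) by (unfold ex, ey, gx, gy, fA, fB, Qv; field).
      rewrite E, Q12, fB0. replace (2*m*((a2*fA + a1*0)/2 + -1)) with (a2*(m*fA) - 2*m) by field. rewrite HfA. ring. }
    split.
    + transitivity (m*((m + 4*a1 - m*(gx^2+gy^2))*(ex^2-ey^2) + ((2*m - 4*a2) + 2*m*(gx*ex+gy*ey))*(gx*ex - gy*ey)
                    + m*(1 - (ex^2+ey^2))*(gx^2-gy^2))).
      * unfold DescR, ex, ey, gx, gy. ring.
      * rewrite H1, H2, H3. ring.
    + transitivity (m*((m + 4*a1 - m*(gx^2+gy^2))*(ex*ey) + ((2*m - 4*a2) + 2*m*(gx*ex+gy*ey))*(gx*ey + gy*ex)/2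
                    + m*(1 - (ex^2+ey^2))*(gx*gy))).
      * unfold DescI, ex, ey, gx, gy. field.
      * rewrite H1, H2, H3. field.
Qed.


Lemma sq_pos t : t <> 0 -> 0 < t^2.
Proof. intro H. pose proof (pow_nonzero t 2 H); pose proof (pow2_ge_0 t); lra. Qed.

Lemma dist2_pos p x y : p <> (x,y) -> 0 < dist2 p x y.
Proof.
  destruct p as [px py]. intro H. unfold dist2; simpl.
  pose proof (pow2_ge_0 (px-x)); pose proof (pow2_ge_0 (py-y)).
  destruct (Req_dec px x) as [h1|h1].
  - destruct (Req_dec py y) as [h2|h2]; [subst; contradiction|].
    assert (0 < (py-y)^2) by (apply sq_pos; lra). lra.
  - assert (0 < (px-x)^2) by (apply sq_pos; lra). lra.
Qed.

Lemma inv_f A x y a b p : valid_disk A -> inv_dom A p ->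
  let k := Qv x y a b (xdot A) (ydot A) (curv A) (cocurv A) in
  exists mu, 0 < mu /\
  fv (x - 2*k*xdot A) (y - 2*k*ydot A) (a - 2*k*curv A) (b - 2*k*cocurv A) p = mu * fv x y a b (inv_map A p).
Proof.
  destruct A as [x0 y0 r|x0 y0 r|nx ny h]; simpl; intros V Hd.
  - pose proof (dist2_pos p x0 y0 Hd) as Hp. exists (dist2 p x0 y0 / r^2). split.
    + apply Rdiv_lt_0_compat; auto. nra.
    + destruct p as [px py]; unfold dist2 in *; simpl in *. unfold fv, Qv; simpl. field. lra.
  - pose proof (dist2_pos p x0 y0 Hd) as Hp. exists (dist2 p x0 y0 / r^2). split.
    + apply Rdiv_lt_0_compat; auto. nra.
    + destruct p as [px py]; unfold dist2 in *; simpl in *. unfold fv, Qv; simpl. field. lra.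
  - exists 1. split; [lra|]. destruct p as [px py]; unfold dotn; simpl. unfold fv, Qv; simpl.
    set (d := px*nx + py*ny - h).
    match goal with |- ?L = 1 * ?R => assert (E : L - R = -4*a*d^2*(nx^2+ny^2-1)) by (unfold d; field) end.
    assert (Z0 : nx^2+ny^2-1 = 0) by (simpl; lra). rewrite Z0 in E. lra.
Qed.


Lemma small a h0 h1 h2 : h0 <> 0 ->
  exists d, 0 < d /\ forall e, 0 < Rabs e <= d ->
    0 < 2 + a*e /\ Rabs (h1*e + h2*e^2) < Rabs h0 / 2.
Proof.
  intro H0. pose proof (Rabs_pos a); pose proof (Rabs_pos h1); pose proof (Rabs_pos h2).
  assert (Ph0 : 0 < Rabs h0) by (apply Rabs_pos_lt; auto).
  set (d := Rmin 1 (Rmin (1/(Rabs a + 1)) (Rabs h0 / (2*(Rabs h1 + Rabs h2 + 1))))).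
  assert (D1 : d <= 1) by apply Rmin_l.
  assert (D2 : d <= 1/(Rabs a + 1)) by (eapply Rle_trans; [apply Rmin_r| apply Rmin_l]).
  assert (D3 : d <= Rabs h0 / (2*(Rabs h1 + Rabs h2 + 1))) by (eapply Rle_trans; [apply Rmin_r| apply Rmin_r]).
  assert (Dp : 0 < d).
  { unfold d. apply Rmin_pos; [lra|]. apply Rmin_pos; apply Rdiv_lt_0_compat; lra. }
  exists d. split; auto. intros e [He1 He2].
  split.
  - assert (Rabs (a*e) < 1).
    { rewrite Rabs_mult. assert (Rabs a * Rabs e <= Rabs a * d) by (apply Rmult_le_compat_l; lra).
      assert (Rabs a * d <= Rabs a * (1/(Rabs a + 1))) by (apply Rmult_le_compat_l; lra).
      assert (Rabs a * (1/(Rabs a + 1)) < 1) by (apply (Rmult_lt_reg_r (Rabs a + 1)); [lra|]; field_simplify; lra).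
      lra. }
    pose proof (Rle_abs (-(a*e))). rewrite Rabs_Ropp in *. lra.
  - assert (T : Rabs (h1*e + h2*e^2) <= (Rabs h1 + Rabs h2) * Rabs e).
    { eapply Rle_trans; [apply Rabs_triang|]. rewrite !Rabs_mult.
      assert (Rabs (e^2) <= Rabs e).
      { rewrite <- RPow_abs. simpl. rewrite Rmult_1_r. assert (0 <= Rabs e) by apply Rabs_pos.
        assert (Rabs e * Rabs e <= Rabs e * 1) by (apply Rmult_le_compat_l; lra). lra. }
      assert (Rabs h2 * Rabs (e^2) <= Rabs h2 * Rabs e) by (apply Rmult_le_compat_l; lra). nra. }
    assert ((Rabs h1 + Rabs h2) * Rabs e <= (Rabs h1 + Rabs h2) * (Rabs h0 / (2*(Rabs h1 + Rabs h2 + 1))))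
      by (apply Rmult_le_compat_l; lra).
    assert ((Rabs h1 + Rabs h2) * (Rabs h0 / (2*(Rabs h1 + Rabs h2 + 1))) < Rabs h0 / 2).
    { apply (Rmult_lt_reg_r (2*(Rabs h1 + Rabs h2 + 1))); [lra|]. field_simplify; [|lra]. nra. }
    lra.
Qed.

Lemma Z1 a h0 h1 h2 (P : R -> Prop) :
  (forall e1 e2, ~ P e1 -> ~ P e2 -> e1 = e2) ->
  (forall e, P e -> (e*(2 + a*e) <= 0 <-> h0 + h1*e + h2*e^2 <= 0)) -> h0 = 0.
Proof.
  intros HP H. destruct (Req_dec h0 0) as [|H0]; auto. exfalso.
  destruct (small a h0 h1 h2 H0) as [d [Dp Hd]].
  assert (Ph0 : 0 < Rabs h0) by (apply Rabs_pos_lt; auto).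
  set (s := if Rlt_dec h0 0 then 1 else -1).
  assert (Hs : Rabs s = 1) by (unfold s; destruct (Rlt_dec h0 0); [apply Rabs_R1| rewrite Rabs_left; lra]).
  assert (Hex : exists e, P e /\ 0 < Rabs e <= d /\ e = s * Rabs e).
  { destruct (Classical_Prop.classic (P (s*d))) as [Q1|Q1].
    - exists (s*d). split; auto. rewrite Rabs_mult, Hs, (Rabs_right d) by lra. split; [lra|]. ring.
    - destruct (Classical_Prop.classic (P (s*(d/2)))) as [Q2|Q2].
      + exists (s*(d/2)). split; auto. rewrite Rabs_mult, Hs, (Rabs_right (d/2)) by lra. split; [lra|]. ring.
      + exfalso. assert (E := HP _ _ Q1 Q2). assert (s <> 0) by (intro Z; rewrite Z, Rabs_R0 in Hs; lra).
        apply Rmult_eq_reg_l in E; auto. lra. }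
  destruct Hex as [e [Pe [He Hes]]].
  destruct (Hd e He) as [A1 A2]. specialize (H e Pe).
  assert (A3 := Rle_abs (h1*e+h2*e^2)). assert (A4 := Rle_abs (-(h1*e+h2*e^2))). rewrite Rabs_Ropp in A4.
  destruct H as [H1 H2].
  unfold s in Hes. destruct (Rlt_dec h0 0) as [Hl|Hl].
  - assert (Ea : Rabs h0 = - h0) by (apply Rabs_left; auto). assert (0 < e) by lra.
    assert (0 < e*(2+a*e)) by (apply Rmult_lt_0_compat; lra).
    assert (HH : h0 + h1*e + h2*e^2 <= 0) by lra. specialize (H2 HH). lra.
  - assert (0 < h0) by lra. assert (Ea : Rabs h0 = h0) by (apply Rabs_right; lra). assert (e < 0) by lra.
    assert (e*(2+a*e) < 0) by (assert (0 < (-e)*(2+a*e)) by (apply Rmult_lt_0_compat; lra); lra).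
    specialize (H1 ltac:(lra)). lra.
Qed.

Lemma zero_incl sx sy sa sb ex ey ea eb (c : point) :
  Qv sx sy sa sb sx sy sa sb = 1 ->
  (forall p, p <> c -> (fv sx sy sa sb p <= 0 <-> fv ex ey ea eb p <= 0)) ->
  forall p, fv sx sy sa sb p = 0 -> fv ex ey ea eb p = 0.
Proof.
  intros N H [px py] F.
  set (gx := sa*px - sx). set (gy := sa*py - sy).
  assert (G : gx^2 + gy^2 = 1).
  { assert (E : gx^2+gy^2 = sa * fv sx sy sa sb (px,py) + Qv sx sy sa sb sx sy sa sb)
      by (unfold gx, gy, fv, Qv; simpl; field). rewrite E, F, N; ring. }
  apply (Z1 sa (fv ex ey ea eb (px,py)) (2*((ea*px - ex)*gx + (ea*py - ey)*gy)) (ea*(gx^2+gy^2))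
           (fun e => (px + e*gx, py + e*gy) <> c)).
  - intros e1 e2 N1 N2. apply Classical_Prop.NNPP in N1. apply Classical_Prop.NNPP in N2.
    rewrite <- N2 in N1. injection N1 as E1 E2.
    assert (E3 : (e1-e2)^2 * (gx^2+gy^2) = 0).
    { replace ((e1-e2)^2 * (gx^2+gy^2)) with ((e1*gx - e2*gx)^2 + (e1*gy - e2*gy)^2) by ring.
      assert (e1*gx - e2*gx = 0) by lra. assert (e1*gy - e2*gy = 0) by lra.
      rewrite H0, H1. ring. }
    rewrite G, Rmult_1_r in E3.
    destruct (Req_dec (e1-e2) 0) as [h|h]; [lra|]. exfalso; apply (pow_nonzero _ 2 h); exact E3.
  - intros e Pe. specialize (H _ Pe).
    assert (ES : fv sx sy sa sb (px + e*gx, py + e*gy) = fv sx sy sa sb (px,py) + (2*e + sa*e^2)*(gx^2+gy^2))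
      by (unfold fv, gx, gy; simpl; ring).
    assert (EE : fv ex ey ea eb (px + e*gx, py + e*gy) = fv ex ey ea eb (px,py)
        + 2*((ea*px - ex)*gx + (ea*py - ey)*gy) * e + ea*(gx^2+gy^2) * e^2)
      by (unfold fv, gx, gy; simpl; ring).
    rewrite ES, F, G, EE in H.
    replace (e*(2+sa*e)) with (0 + (2*e + sa*e^2)*1) by ring. exact H.
Qed.

Lemma prop_vec sx sy sa sb ex ey ea eb :
  Qv sx sy sa sb sx sy sa sb = 1 ->
  (forall p, fv sx sy sa sb p = 0 -> fv ex ey ea eb p = 0) ->
  exists l, ex = l*sx /\ ey = l*sy /\ ea = l*sa /\ eb = l*sb.
Proof.
  intros N Z.
  destruct (Req_dec sa 0) as [Ha|Ha].
  - subst sa. assert (U : sx^2+sy^2 = 1) by (unfold Qv in N; lra).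
    set (p := fun t => (sb*sx/2 - t*sy, sb*sy/2 + t*sx)).
    assert (Zt : forall t, fv ex ey ea eb (p t) = 0).
    { intro t. apply Z. unfold fv, p; simpl.
      transitivity (sb*(1 - (sx^2+sy^2))); [field| rewrite U; ring]. }
    assert (Z0 := Zt 0). assert (Z1 := Zt 1). assert (Zm := Zt (-1)).
    unfold fv, p in Z0, Z1, Zm; simpl in Z0, Z1, Zm.
    assert (Hea : ea = 0) by nra.
    assert (Hp : -ex*sy + ey*sx = 0) by nra.
    exists (ex*sx + ey*sy). subst ea.
    split; [|split; [|split]].
    + transitivity (ex*(sx^2+sy^2)); [rewrite U; ring|].
      transitivity ((ex*sx+ey*sy)*sx - (-ex*sy+ey*sx)*sy); [ring|rewrite Hp; ring].
    + transitivity (ey*(sx^2+sy^2)); [rewrite U; ring|].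
      transitivity ((ex*sx+ey*sy)*sy + (-ex*sy+ey*sx)*sx); [ring|rewrite Hp; ring].
    + ring.
    + nra.
  - set (mx := sx/sa). set (my := sy/sa).
    assert (Zp : forall ux uy, ux^2+uy^2 = 1 -> fv ex ey ea eb (mx + ux/sa, my + uy/sa) = 0).
    { intros ux uy Hu. apply Z. unfold fv, mx, my; simpl.
      transitivity ((ux^2+uy^2 - Qv sx sy sa sb sx sy sa sb)/sa); [unfold Qv; field; auto|].
      rewrite Hu, N. field; auto. }
    assert (P1 := Zp 1 0 ltac:(ring)). assert (P2 := Zp (-1) 0 ltac:(ring)). assert (P3 := Zp 0 1 ltac:(ring)).
    exists (ea/sa).
    set (F1 := fv ex ey ea eb (mx + 1/sa, my + 0/sa)) in *.
    set (F2 := fv ex ey ea eb (mx + -1/sa, my + 0/sa)) in *.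
    set (F3 := fv ex ey ea eb (mx + 0/sa, my + 1/sa)) in *.
    assert (Ex : ea*sx - ex*sa = 0).
    { replace (ea*sx - ex*sa) with ((sa^2/4) * (F1 - F2)) by (unfold F1, F2, fv, mx, my; simpl; field; auto).
      rewrite P1, P2. field. }
    assert (Ey : ea*sy - ey*sa = 0).
    { replace (ea*sy - ey*sa) with ((sa^2/2) * (F3 - (F1 + F2)/2)) by (unfold F1, F2, F3, fv, mx, my; simpl; field; auto).
      rewrite P1, P2, P3. field. }
    assert (Hex : ex = ea/sa*sx).
    { apply (Rmult_eq_reg_l sa); auto. replace (sa*(ea/sa*sx)) with (ea*sx) by (field; auto). lra. }
    assert (Hey : ey = ea/sa*sy).
    { apply (Rmult_eq_reg_l sa); auto. replace (sa*(ea/sa*sy)) with (ea*sy) by (field; auto). lra. }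
    split; [auto|split; [auto|split; [field; auto|]]].
    assert (K2 : (F1 + F2)/2 = (eb - ea/sa*sb) - (ea/sa^2)*(Qv sx sy sa sb sx sy sa sb - 1)).
    { unfold F1, F2, fv, mx, my, Qv; simpl. rewrite Hex, Hey. field; auto. }
    rewrite N, P1, P2 in K2. lra.
Qed.

Lemma two_pts sx sy sa sb : Qv sx sy sa sb sx sy sa sb = 1 ->
  exists q1 q2 : point, q1 <> q2 /\ fv sx sy sa sb q1 <> 0 /\ fv sx sy sa sb q2 <> 0.
Proof.
  intro N. destruct (Req_dec sa 0) as [Ha|Ha].
  - subst sa. assert (U : sx^2+sy^2 = 1) by (unfold Qv in N; lra).
    exists ((sb/2+1)*sx, (sb/2+1)*sy), ((sb/2-1)*sx, (sb/2-1)*sy). split; [|split].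
    + intro E. injection E as E1 E2. assert (sx = 0) by lra. assert (sy = 0) by lra. subst. lra.
    + replace (fv sx sy 0 sb ((sb/2+1)*sx, (sb/2+1)*sy)) with (-2*(sb/2+1)*(sx^2+sy^2) + sb) by (unfold fv; simpl; ring).
      rewrite U. lra.
    + replace (fv sx sy 0 sb ((sb/2-1)*sx, (sb/2-1)*sy)) with (-2*(sb/2-1)*(sx^2+sy^2) + sb) by (unfold fv; simpl; ring).
      rewrite U. lra.
  - exists (sx/sa, sy/sa), (sx/sa + 2/sa, sy/sa). split; [|split].
    + intro E. injection E as E1. assert (2/sa = 0) by lra.
      apply Rmult_integral in H. destruct H as [H|H]; [lra|]. apply Rinv_neq_0_compat in Ha. contradiction.
    + replace (fv sx sy sa sb (sx/sa, sy/sa)) with (- Qv sx sy sa sb sx sy sa sb / sa) by (unfold fv, Qv; simpl; field; auto).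
      rewrite N. intro E. apply (Rmult_eq_compat_l sa) in E. field_simplify in E; auto. lra.
    + replace (fv sx sy sa sb (sx/sa + 2/sa, sy/sa)) with ((4 - Qv sx sy sa sb sx sy sa sb) / sa) by (unfold fv, Qv; simpl; field; auto).
      rewrite N. intro E. apply (Rmult_eq_compat_l sa) in E. field_simplify in E; auto. lra.
Qed.

Lemma uniq sx sy sa sb ex ey ea eb (c : point) :
  Qv sx sy sa sb sx sy sa sb = 1 -> Qv ex ey ea eb ex ey ea eb = 1 ->
  (forall p, p <> c -> (fv sx sy sa sb p <= 0 <-> fv ex ey ea eb p <= 0)) ->
  ex = sx /\ ey = sy /\ ea = sa /\ eb = sb.
Proof.
  intros NS NE H.
  destruct (prop_vec sx sy sa sb ex ey ea eb NS (zero_incl sx sy sa sb ex ey ea eb c NS H)) as [l [E1 [E2 [E3 E4]]]].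
  subst ex ey ea eb.
  assert (L2 : l^2 = 1).
  { rewrite <- NE. replace (Qv (l*sx) (l*sy) (l*sa) (l*sb) (l*sx) (l*sy) (l*sa) (l*sb)) with (l^2 * Qv sx sy sa sb sx sy sa sb)
      by (unfold Qv; field). rewrite NS. ring. }
  assert (Hl : (l - 1)*(l+1) = 0) by nra. apply Rmult_integral in Hl. destruct Hl as [Hl|Hl].
  - assert (l = 1) by lra. subst l. repeat split; ring.
  - exfalso. assert (l = -1) by lra. subst l.
    assert (F : forall p, fv (-1*sx) (-1*sy) (-1*sa) (-1*sb) p = - fv sx sy sa sb p) by (intro; unfold fv; ring).
    destruct (two_pts sx sy sa sb NS) as [q1 [q2 [D [N1 N2]]]].
    assert (Hq : exists q, q <> c /\ fv sx sy sa sb q <> 0).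
    { destruct (Classical_Prop.classic (q1 = c)) as [->|h]; [exists q2; split; auto| exists q1; split; auto]. }
    destruct Hq as [q [Hq1 Hq2]]. specialize (H q Hq1). rewrite F in H. destruct H as [H1 H2].
    destruct (Rlt_or_le (fv sx sy sa sb q) 0) as [h|h].
    + specialize (H1 ltac:(lra)). lra.
    + assert (0 < fv sx sy sa sb q) by lra. specialize (H2 ltac:(lra)). lra.
Qed.

Lemma Qd_sym d e : Qd d e = Qd e d.
Proof. unfold Qd. apply Qv_sym. Qed.

Lemma sym_inj d e : valid_disk d -> valid_disk e ->
  xdot d = xdot e -> ydot d = ydot e -> curv d = curv e -> cocurv d = cocurv e -> d = e.
Proof.
  destruct d as [x y r|x y r|nx ny h]; destruct e as [x' y' r'|x' y' r'|nx' ny' h']; simpl;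
  intros V V' E1 E2 E3 E4.
  - assert (r = r') by (apply (Rmult_eq_reg_l (1/r * (1/r'))); [field_simplify; try lra; rewrite E3; field; lra| apply Rmult_integral_contrapositive; split; apply Rgt_not_eq; apply Rdiv_lt_0_compat; lra]).
    subst r'. assert (1/r <> 0) by (apply Rgt_not_eq; apply Rdiv_lt_0_compat; lra).
    apply Rmult_eq_reg_l in E1; auto. apply Rmult_eq_reg_l in E2; auto. subst; auto.
  - exfalso. assert (0 < 1/r) by (apply Rdiv_lt_0_compat; lra). assert (0 < 1/r') by (apply Rdiv_lt_0_compat; lra). lra.
  - exfalso. assert (0 < 1/r) by (apply Rdiv_lt_0_compat; lra). lra.
  - exfalso. assert (0 < 1/r) by (apply Rdiv_lt_0_compat; lra). assert (0 < 1/r') by (apply Rdiv_lt_0_compat; lra). lra.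
  - assert (E3' : 1/r = 1/r') by lra.
    assert (r = r') by (apply (Rmult_eq_reg_l (1/r * (1/r'))); [field_simplify; try lra; rewrite E3'; field; lra| apply Rmult_integral_contrapositive; split; apply Rgt_not_eq; apply Rdiv_lt_0_compat; lra]).
    subst r'. assert (-(1/r) <> 0) by (assert (0 < 1/r) by (apply Rdiv_lt_0_compat; lra); lra).
    apply Rmult_eq_reg_l in E1; auto. apply Rmult_eq_reg_l in E2; auto. subst; auto.
  - exfalso. assert (0 < 1/r) by (apply Rdiv_lt_0_compat; lra). lra.
  - exfalso. assert (0 < 1/r') by (apply Rdiv_lt_0_compat; lra). lra.
  - exfalso. assert (0 < 1/r') by (apply Rdiv_lt_0_compat; lra). lra.
  - subst. f_equal. lra.
Qed.

Lemma int_conj a b c d : is_int a -> is_int b -> is_int c -> is_int d -> is_int (2*(a+b+c) - d).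
Proof.
  intros [za ->] [zb ->] [zc ->] [zd ->]. exists (2*(za+zb+zc) - zd)%Z.
  rewrite minus_IZR, mult_IZR, !plus_IZR. simpl. ring.
Qed.
Lemma int_add2 a b : is_int a -> is_int b -> is_int (a + 2*b).
Proof. intros [za ->] [zb ->]. exists (za + 2*zb)%Z. rewrite plus_IZR, mult_IZR. simpl. ring. Qed.
Lemma int_neg a : is_int a -> is_int (-a).
Proof. intros [za ->]. exists (-za)%Z. rewrite opp_IZR. ring. Qed.

Lemma desc4 p1 q1 p2 q2 p3 q3 p4 q4 :
  (p1^2 - q1^2) + (p2^2-q2^2) + (p3^2 - q3^2) + (p4^2 - q4^2) - ((p1+p2+p3+p4)^2 - (q1+q2+q3+q4)^2)/2 = 0 ->
  p1*q1 + p2*q2 + p3*q3 + p4*q4 - (p1+p2+p3+p4)*(q1+q2+q3+q4)/2 = 0 ->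
  p1 = 0 -> q1 = 0 ->
  DescR p2 q2 p3 q3 p4 q4 = 0 /\ DescI p2 q2 p3 q3 p4 q4 = 0.
Proof.
  intros H1 H2 -> ->. split.
  - transitivity (2*((0^2 - 0^2) + (p2^2-q2^2) + (p3^2 - q3^2) + (p4^2 - q4^2) - ((0+p2+p3+p4)^2 - (0+q2+q3+q4)^2)/2));
      [unfold DescR; field| rewrite H1; ring].
  - transitivity (2*(0*0 + p2*q2 + p3*q3 + p4*q4 - (0+p2+p3+p4)*(0+q2+q3+q4)/2));
      [unfold DescI; field| rewrite H2; ring].
Qed.

Lemma refl_norm x y a b xa ya aa ba : Qv xa ya aa ba xa ya aa ba = 1 ->
  let k := Qv x y a b xa ya aa ba in
  Qv (x - 2*k*xa) (y - 2*k*ya) (a - 2*k*aa) (b - 2*k*ba) (x - 2*k*xa) (y - 2*k*ya) (a - 2*k*aa) (b - 2*k*ba)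
  = Qv x y a b x y a b.
Proof.
  intros HA k.
  assert (E : Qv (x - 2*k*xa) (y - 2*k*ya) (a - 2*k*aa) (b - 2*k*ba) (x - 2*k*xa) (y - 2*k*ya) (a - 2*k*aa) (b - 2*k*ba)
    = Qv x y a b x y a b + 4*k^2*(Qv xa ya aa ba xa ya aa ba - 1)) by (unfold k, Qv; field).
  rewrite E, HA. ring.
Qed.

Lemma inv_sym A X X1 : valid_disk A -> valid_disk X -> valid_disk X1 -> inv_image A X X1 ->
  xdot X1 = xdot X - 2*(Qd X A)*xdot A /\ ydot X1 = ydot X - 2*(Qd X A)*ydot A /\
  curv X1 = curv X - 2*(Qd X A)*curv A /\ cocurv X1 = cocurv X - 2*(Qd X A)*cocurv A.
Proof.
  intros VA VX VX1 HI.
  assert (Hc : exists c : point, forall p, p <> c -> inv_dom A p).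
  { destruct A as [x y r|x y r|nx ny h]; simpl; [exists (x,y)|exists (x,y)|exists (0,0)]; auto. }
  destruct Hc as [c Hc].
  assert (NE := refl_norm (xdot X) (ydot X) (curv X) (cocurv X) (xdot A) (ydot A) (curv A) (cocurv A) (norm1 A VA)).
  simpl in NE. fold (Qd X A) in NE. fold (Qd X X) in NE. rewrite (norm1 X VX) in NE.
  destruct (uniq (xdot X1) (ydot X1) (curv X1) (cocurv X1)
     (xdot X - 2*(Qd X A)*xdot A) (ydot X - 2*(Qd X A)*ydot A) (curv X - 2*(Qd X A)*curv A) (cocurv X - 2*(Qd X A)*cocurv A)
     c (norm1 X1 VX1) NE) as [E1 [E2 [E3 E4]]].
  - intros p Hp. specialize (Hc p Hp).
    destruct (inv_f A (xdot X) (ydot X) (curv X) (cocurv X) p VA Hc) as [mu [Hmu Heq]].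
    fold (Qd X A) in Heq. rewrite Heq.
    change (fv (xdot X1) (ydot X1) (curv X1) (cocurv X1) p) with (fd X1 p).
    change (fv (xdot X) (ydot X) (curv X) (cocurv X) (inv_map A p)) with (fd X (inv_map A p)).
    rewrite <- (mem_f X1 p VX1), (HI p Hc), (mem_f X _ VX).
    split; intro H.
    + assert (0 <= mu * (- fd X (inv_map A p))) by (apply Rmult_le_pos; lra). lra.
    + destruct (Rle_or_lt (fd X (inv_map A p)) 0) as [h|h]; auto.
      assert (0 < mu * fd X (inv_map A p)) by (apply Rmult_lt_0_compat; lra). lra.
  - repeat split; symmetry; auto.
Qed.

Lemma gneg d e : gaussian_spinor d e -> gauss (spin_sq_re e d) (spin_sq_im e d).
Proof.
  intro G. replace (spin_sq_re e d) with (- spin_sq_re d e) by (unfold spin_sq_re; ring).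
  replace (spin_sq_im e d) with (- spin_sq_im d e) by (unfold spin_sq_im; ring).
  apply gauss_neg. exact G.
Qed.

Theorem mainTheorem6 (A B C D : disk) :
  descartes A B C D ->
  all_integral A B C D ->
  all_gaussian A B C D ->
  (forall D' : disk,
     descartes_conjugate A B C D D' ->
     descartes A B C D' /\
     xdot D + xdot D' = 2 * (xdot A + xdot B + xdot C) /\
     ydot D + ydot D' = 2 * (ydot A + ydot B + ydot C) /\
     curv D + curv D' = 2 * (curv A + curv B + curv C) /\
     cocurv D + cocurv D' = 2 * (cocurv A + cocurv B + cocurv C) /\
     all_integral A B C D' /\ all_gaussian A B C D') /\
  (forall A1 B1 C1 D1 : disk,
     valid_disk A1 -> valid_disk B1 -> valid_disk C1 -> valid_disk D1 ->
     inv_image A A A1 -> inv_image A B B1 ->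
     inv_image A C C1 -> inv_image A D D1 ->
     symbol A1 = (- xdot A, - ydot A, - curv A, - cocurv A) /\
     symbol B1 = (xdot B + 2 * xdot A, ydot B + 2 * ydot A,
                  curv B + 2 * curv A, cocurv B + 2 * cocurv A) /\
     symbol C1 = (xdot C + 2 * xdot A, ydot C + 2 * ydot A,
                  curv C + 2 * curv A, cocurv C + 2 * cocurv A) /\
     symbol D1 = (xdot D + 2 * xdot A, ydot D + 2 * ydot A,
                  curv D + 2 * curv A, cocurv D + 2 * cocurv A) /\
     all_integral A1 B1 C1 D1 /\ all_gaussian A1 B1 C1 D1).
Proof.
  intros [VA [VB [VC [VD [TAB [TAC [TAD [TBC [TBD TCD]]]]]]]]] HI HG.
  assert (QAA := norm1 A VA). assert (QBB := norm1 B VB). assert (QCC := norm1 C VC). assert (QDD := norm1 D VD).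
  assert (QAB := tangQ A B VA VB TAB). assert (QAC := tangQ A C VA VC TAC). assert (QAD := tangQ A D VA VD TAD).
  assert (QBC := tangQ B C VB VC TBC). assert (QBD := tangQ B D VB VD TBD). assert (QCD := tangQ C D VC VD TCD).
  assert (QBA : Qd B A = -1) by (rewrite Qd_sym; auto).
  assert (QCA : Qd C A = -1) by (rewrite Qd_sym; auto).
  assert (QDA : Qd D A = -1) by (rewrite Qd_sym; auto).
  assert (QCB : Qd C B = -1) by (rewrite Qd_sym; auto).
  assert (QDB : Qd D B = -1) by (rewrite Qd_sym; auto).
  assert (QDC : Qd D C = -1) by (rewrite Qd_sym; auto).
  destruct HI as [[IAx [IAy [IAa IAb]]] [[IBx [IBy [IBa IBb]]] [[ICx [ICy [ICa ICb]]] [IDx [IDy [IDa IDb]]]]]].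
  destruct HG as [GAB [GAC [GAD [GBC [GBD GCD]]]]].
  assert (GBA := gneg A B GAB). assert (GCA := gneg A C GAC). assert (GDA := gneg A D GAD).
  assert (GCB := gneg B C GBC). assert (GDB := gneg B D GBD). assert (GDC := gneg C D GCD).
  split.
  - intros D' [VD' [TAD' [TBD' [TCD' Hne]]]].
    assert (QEE := norm1 D' VD').
    assert (QAE := tangQ A D' VA VD' TAD'). assert (QBE := tangQ B D' VB VD' TBD'). assert (QCE := tangQ C D' VC VD' TCD').
    destruct (F1core (xdot A) (ydot A) (curv A) (cocurv A) (xdot B) (ydot B) (curv B) (cocurv B)
                     (xdot C) (ydot C) (curv C) (cocurv C) (xdot D) (ydot D) (curv D) (cocurv D)
                     (xdot D') (ydot D') (curv D') (cocurv D')
                     QAA QAB QAC QAD QBB QBC QBD QCC QCD QDD QAE QBE QCE QEE) as [[E1 [E2 [E3 E4]]]|[E1 [E2 [E3 E4]]]].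
    { exfalso. apply Hne. apply sym_inj; auto. }
    destruct (F3 (xdot A) (ydot A) (curv A) (cocurv A) (xdot B) (ydot B) (curv B) (cocurv B)
                 (xdot C) (ydot C) (curv C) (cocurv C) (xdot D) (ydot D) (curv D) (cocurv D)
                 (xdot A) (ydot A) (curv A) QAA QAB QAC QAD QBB QBC QBD QCC QCD QDD) as [FAa FAb].
    pose proof (desc4 _ _ _ _ _ _ _ _ FAa FAb) as DA. specialize (DA ltac:(ring) ltac:(ring)).
    destruct (F3 (xdot B) (ydot B) (curv B) (cocurv B) (xdot A) (ydot A) (curv A) (cocurv A)
                 (xdot C) (ydot C) (curv C) (cocurv C) (xdot D) (ydot D) (curv D) (cocurv D)
                 (xdot B) (ydot B) (curv B) QBB QBA QBC QBD QAA QAC QAD QCC QCD QDD) as [FBa FBb].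
    pose proof (desc4 _ _ _ _ _ _ _ _ FBa FBb) as DB. specialize (DB ltac:(ring) ltac:(ring)).
    destruct (F3 (xdot C) (ydot C) (curv C) (cocurv C) (xdot A) (ydot A) (curv A) (cocurv A)
                 (xdot B) (ydot B) (curv B) (cocurv B) (xdot D) (ydot D) (curv D) (cocurv D)
                 (xdot C) (ydot C) (curv C) QCC QCA QCB QCD QAA QAB QAD QBB QBD QDD) as [FCa FCb].
    pose proof (desc4 _ _ _ _ _ _ _ _ FCa FCb) as DC. specialize (DC ltac:(ring) ltac:(ring)).
    split; [|split; [|split; [|split; [|split; [|split]]]]].
    + exact (conj VA (conj VB (conj VC (conj VD' (conj TAB (conj TAC (conj TAD' (conj TBC (conj TBD' TCD'))))))))).
    + lra.
    + lra.
    + lra.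
    + lra.
    + split; [exact (conj IAx (conj IAy (conj IAa IAb)))|split; [exact (conj IBx (conj IBy (conj IBa IBb)))|split; [exact (conj ICx (conj ICy (conj ICa ICb)))|]]].
      unfold integral_symbol. rewrite E1, E2, E3, E4.
      refine (conj _ (conj _ (conj _ _))); apply int_conj; auto.
    + split; [exact GAB|split; [exact GAC|split; [|split; [exact GBC|split]]]].
      * change (gauss (spin_sq_re A D') (spin_sq_im A D')).
        replace (spin_sq_re A D') with (2*spin_sq_re A B + 2*spin_sq_re A C - spin_sq_re A D)
          by (unfold spin_sq_re; rewrite E1, E3; ring).
        replace (spin_sq_im A D') with (2*spin_sq_im A B + 2*spin_sq_im A C - spin_sq_im A D)
          by (unfold spin_sq_im; rewrite E2, E3; ring).
        apply G4; [exact GAB|exact GAC|exact GAD|exact (proj1 DA)|exact (proj2 DA)].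
      * change (gauss (spin_sq_re B D') (spin_sq_im B D')).
        replace (spin_sq_re B D') with (2*spin_sq_re B A + 2*spin_sq_re B C - spin_sq_re B D)
          by (unfold spin_sq_re; rewrite E1, E3; ring).
        replace (spin_sq_im B D') with (2*spin_sq_im B A + 2*spin_sq_im B C - spin_sq_im B D)
          by (unfold spin_sq_im; rewrite E2, E3; ring).
        apply G4; [exact GBA|exact GBC|exact GBD|exact (proj1 DB)|exact (proj2 DB)].
      * change (gauss (spin_sq_re C D') (spin_sq_im C D')).
        replace (spin_sq_re C D') with (2*spin_sq_re C A + 2*spin_sq_re C B - spin_sq_re C D)
          by (unfold spin_sq_re; rewrite E1, E3; ring).
        replace (spin_sq_im C D') with (2*spin_sq_im C A + 2*spin_sq_im C B - spin_sq_im C D)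
          by (unfold spin_sq_im; rewrite E2, E3; ring).
        apply G4; [exact GCA|exact GCB|exact GCD|exact (proj1 DC)|exact (proj2 DC)].
  - intros A1 B1 C1 D1 VA1 VB1 VC1 VD1 IA1 IB1 IC1 ID1.
    destruct (inv_sym A A A1 VA VA VA1 IA1) as [a1 [a2 [a3 a4]]]. rewrite QAA in a1, a2, a3, a4.
    destruct (inv_sym A B B1 VA VB VB1 IB1) as [b1 [b2 [b3 b4]]]. rewrite QBA in b1, b2, b3, b4.
    destruct (inv_sym A C C1 VA VC VC1 IC1) as [c1 [c2 [c3 c4]]]. rewrite QCA in c1, c2, c3, c4.
    destruct (inv_sym A D D1 VA VD VD1 ID1) as [d1 [d2 [d3 d4]]]. rewrite QDA in d1, d2, d3, d4.
    destruct (F2 (xdot A) (ydot A) (curv A) (cocurv A) (xdot B) (ydot B) (curv B) (cocurv B)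
                 (xdot C) (ydot C) (curv C) (cocurv C) QAA QBB QCC QAB QAC QBC) as [DBC1 DBC2].
    destruct (F2 (xdot A) (ydot A) (curv A) (cocurv A) (xdot B) (ydot B) (curv B) (cocurv B)
                 (xdot D) (ydot D) (curv D) (cocurv D) QAA QBB QDD QAB QAD QBD) as [DBD1 DBD2].
    destruct (F2 (xdot A) (ydot A) (curv A) (cocurv A) (xdot C) (ydot C) (curv C) (cocurv C)
                 (xdot D) (ydot D) (curv D) (cocurv D) QAA QCC QDD QAC QAD QCD) as [DCD1 DCD2].
    split; [|split; [|split; [|split; [|split]]]].
    + unfold symbol. rewrite a1, a2, a3, a4. f_equal; [f_equal; [f_equal|]|]; ring.
    + unfold symbol. rewrite b1, b2, b3, b4. f_equal; [f_equal; [f_equal|]|]; ring.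
    + unfold symbol. rewrite c1, c2, c3, c4. f_equal; [f_equal; [f_equal|]|]; ring.
    + unfold symbol. rewrite d1, d2, d3, d4. f_equal; [f_equal; [f_equal|]|]; ring.
    + unfold all_integral, integral_symbol.
      rewrite a1, a2, a3, a4, b1, b2, b3, b4, c1, c2, c3, c4, d1, d2, d3, d4.
      refine (conj (conj _ (conj _ (conj _ _))) (conj (conj _ (conj _ (conj _ _))) (conj (conj _ (conj _ (conj _ _))) (conj _ (conj _ (conj _ _)))))).
      all: match goal with
           | |- is_int (?x - 2 * 1 * ?y) => replace (x - 2*1*y) with (-x) by ring; apply int_neg; auto
           | |- is_int (?x - 2 * -1 * ?y) => replace (x - 2*(-1)*y) with (x + 2*y) by ring; apply int_add2; auto
           end.
    + unfold all_gaussian.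
      split; [|split; [|split; [|split; [|split]]]].
      * change (gauss (spin_sq_re A1 B1) (spin_sq_im A1 B1)).
        replace (spin_sq_re A1 B1) with (- spin_sq_re A B) by (unfold spin_sq_re; rewrite a1, a3, b1, b3; ring).
        replace (spin_sq_im A1 B1) with (- spin_sq_im A B) by (unfold spin_sq_im; rewrite a2, a3, b2, b3; ring).
        apply gauss_neg; exact GAB.
      * change (gauss (spin_sq_re A1 C1) (spin_sq_im A1 C1)).
        replace (spin_sq_re A1 C1) with (- spin_sq_re A C) by (unfold spin_sq_re; rewrite a1, a3, c1, c3; ring).
        replace (spin_sq_im A1 C1) with (- spin_sq_im A C) by (unfold spin_sq_im; rewrite a2, a3, c2, c3; ring).
        apply gauss_neg; exact GAC.
      * change (gauss (spin_sq_re A1 D1) (spin_sq_im A1 D1)).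
        replace (spin_sq_re A1 D1) with (- spin_sq_re A D) by (unfold spin_sq_re; rewrite a1, a3, d1, d3; ring).
        replace (spin_sq_im A1 D1) with (- spin_sq_im A D) by (unfold spin_sq_im; rewrite a2, a3, d2, d3; ring).
        apply gauss_neg; exact GAD.
      * change (gauss (spin_sq_re B1 C1) (spin_sq_im B1 C1)).
        replace (spin_sq_re B1 C1) with (2*spin_sq_re B A + 2*spin_sq_re A C - spin_sq_re C B)
          by (unfold spin_sq_re; rewrite b1, b3, c1, c3; ring).
        replace (spin_sq_im B1 C1) with (2*spin_sq_im B A + 2*spin_sq_im A C - spin_sq_im C B)
          by (unfold spin_sq_im; rewrite b2, b3, c2, c3; ring).
        apply G4; [exact GBA|exact GAC|exact GCB|exact DBC1|exact DBC2].
      * change (gauss (spin_sq_re B1 D1) (spin_sq_im B1 D1)).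
        replace (spin_sq_re B1 D1) with (2*spin_sq_re B A + 2*spin_sq_re A D - spin_sq_re D B)
          by (unfold spin_sq_re; rewrite b1, b3, d1, d3; ring).
        replace (spin_sq_im B1 D1) with (2*spin_sq_im B A + 2*spin_sq_im A D - spin_sq_im D B)
          by (unfold spin_sq_im; rewrite b2, b3, d2, d3; ring).
        apply G4; [exact GBA|exact GAD|exact GDB|exact DBD1|exact DBD2].
      * change (gauss (spin_sq_re C1 D1) (spin_sq_im C1 D1)).
        replace (spin_sq_re C1 D1) with (2*spin_sq_re C A + 2*spin_sq_re A D - spin_sq_re D C)
          by (unfold spin_sq_re; rewrite c1, c3, d1, d3; ring).
        replace (spin_sq_im C1 D1) with (2*spin_sq_im C A + 2*spin_sq_im A D - spin_sq_im D C)
          by (unfold spin_sq_im; rewrite c2, c3, d2, d3; ring).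
        apply G4; [exact GCA|exact GAD|exact GDC|exact DCD1|exact DCD2].
Qed.
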